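(* Let $\mathfrak g=\mathfrak g_{-3}\oplus\cdots\oplus\mathfrak g_3$ be the $\mathbb Z$-grading of $\mathfrak g=G(3)$ associated with $\mathfrak p_2^{\rm IV}$ and $\mathfrak m=\mathfrak g_{-3}\oplus\mathfrak g_{-2}\oplus\mathfrak g_{-1}$. Then $H^{0,1}(\mathfrak m_{\bar1},\mathfrak g)\cong\mathfrak{sp}(2)$, whereas $H^{d,1}(\mathfrak m_{\bar1},\mathfrak g)=0$ for all $d>0$.
   Context: $G(3)$: complex exceptional simple Lie superalgebra of dimension $(17|14)$, $\mathfrak g_{\bar0}=G(2)\oplus\mathfrak{sp}(2)$, $\mathfrak g_{\bar1}=\mathbb C^7\boxtimes\mathbb C^2$. With even roots $\pm2\delta,\pm\epsilon_i,\epsilon_i-\epsilon_j$ and odd roots $\pm\delta,\pm\delta\pm\epsilon_i$ ($\epsilon_1+\epsilon_2+\epsilon_3=0$), take simple roots $\alpha_1=\epsilon_2-\epsilon_1,\alpha_2=\epsilon_1-\delta,\alpha_3=\delta$ with dual basis $\mathsf Z_1,\mathsf Z_2,\mathsf Z_3$; the grading is the eigenspace decomposition of $\mathrm{ad}\,\mathsf Z_2$ (so $\mathfrak{sp}(2)\subset\mathfrak g_0$). Let $C^\bullet(\mathfrak m,\mathfrak g)=\mathfrak g\otimes\Lambda^\bullet\mathfrak m^*$ be the Chevalley–Eilenberg complex of $\mathfrak m$ with coefficients in the adjoint module, graded by degree ($\mathfrak g_j^*$ of degree $-j$). $C^\bullet(\mathfrak m_{\bar1},\mathfrak g)$ denotes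 the subcomplex with $C^0(\mathfrak m_{\bar1},\mathfrak g)=0$ and, for $n\ge1$, consisting of the $n$-cochains that vanish when all arguments lie in $\mathfrak m_{\bar0}$; $H^{d,n}(\mathfrak m_{\bar1},\mathfrak g)$ is its cohomology in degree $d$. *)

(* Defs.v *)
From HB Require Import structures.
From mathcomp Require Import all_boot all_order all_algebra.
Set Implicit Arguments. Unset Strict Implicit. Unset Printing Implicit Defensive.
Import Order.TTheory GRing.Theory Num.Theory.
Local Open Scope ring_scope.

(* The exceptional Lie superalgebra G(3), given by explicit structure         *)
(* constants in a homogeneous weight basis e_0, ..., e_30.                    *)
(*  * e_0 .. e_13  : a basis of G(2) (e_0, e_1 Cartan, the others root        *)
(*                   vectors),  realised as the derivation algebra of the     *)
(*                   split octonions (Zorn vector-matrix model), acting on    *)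
(*                   the 7-dimensional imaginary octonions C^7;               *)
(*  * e_14,e_15,e_16: the standard basis E, H, F of sp(2) = sl(2);            *)
(*  * e_17 .. e_30 : the odd part C^7 (x) C^2, e_(17+2a+s) = u_a (x) w_s,     *)
(*                   u_a the weight basis of C^7, w_0, w_1 the basis of C^2.  *)
(*  even-even : commutator; even-odd : natural action;                        *)
(*  odd-odd   : [u(x)a, v(x)b] = 2/3 B(u,v) rho(a,b) + omega(a,b) pi(u^v),     *)
(*              B the G(2)-invariant form on C^7, omega the symplectic form   *)
(*              on C^2, rho(a,b) = omega(a,-)b + omega(b,-)a in sp(2), pi the *)
(*              orthogonal projection so(7) -> G(2).                          *)
(* The ratio 2/3 is the unique one for which the super Jacobi identity holds; *)
(* this identity, and super skew-symmetry, were checked exactly (over Q) for  *)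
(* all 31^3 basis triples.  The result is the (unique) simple Lie superalgebra *)
(* of type G(3), of dimension (17|14).                                        *)
(* g3_table lists the nonzero structure constants: ((i,j,k),(p,q)) means that *)
(* the coefficient of e_k in [e_i, e_j] is p/q.                               *)
(* g3_weights lists the weight of e_i as (a,b,c), meaning a*delta + b*eps_1 + *)
(* c*eps_2 (recall eps_3 = -eps_1 - eps_2).  The roots are exactly the even   *)
(* roots +-2delta, +-eps_i, eps_i - eps_j and the odd roots +-delta,          *)
(* +-delta +- eps_i.                                                          *)
(* With simple roots alpha_1 = eps_2 - eps_1, alpha_2 = eps_1 - delta,        *)
(* alpha_3 = delta one has delta = alpha_3, eps_1 = alpha_2 + alpha_3,        *)
(* eps_2 = alpha_1 + alpha_2 + alpha_3; hence the eigenvalue of ad Z_2 (Z_2   *)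
(* dual to alpha_2) on a vector of weight a*delta + b*eps_1 + c*eps_2 is b+c. *)

Definition g3_table : seq ((nat * nat * nat) * (int * nat)) :=
  [:: ((0,2,2),((- 1%:Z),1));
     ((0,3,3),(1%:Z,1));
     ((0,5,5),((- 1%:Z),1));
     ((0,6,6),((- 2%:Z),1));
     ((0,7,7),(1%:Z,1));
     ((0,8,8),((- 1%:Z),1));
     ((0,9,9),(2%:Z,1));
     ((0,10,10),(1%:Z,1));
     ((0,12,12),((- 1%:Z),1));
     ((0,13,13),(1%:Z,1));
     ((0,19,19),(1%:Z,1));
     ((0,20,20),(1%:Z,1));
     ((0,21,21),((- 1%:Z),1));
     ((0,22,22),((- 1%:Z),1));
     ((0,25,25),((- 1%:Z),1));
     ((0,26,26),((- 1%:Z),1));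
     ((0,27,27),(1%:Z,1));
     ((0,28,28),(1%:Z,1));
     ((1,2,2),((- 2%:Z),1));
     ((1,3,3),((- 1%:Z),1));
     ((1,4,4),((- 1%:Z),1));
     ((1,5,5),((- 1%:Z),1));
     ((1,6,6),((- 1%:Z),1));
     ((1,9,9),(1%:Z,1));
     ((1,10,10),(1%:Z,1));
     ((1,11,11),(1%:Z,1));
     ((1,12,12),(1%:Z,1));
     ((1,13,13),(2%:Z,1));
     ((1,19,19),(1%:Z,1));
     ((1,20,20),(1%:Z,1));
     ((1,23,23),((- 1%:Z),1));
     ((1,24,24),((- 1%:Z),1));
     ((1,25,25),((- 1%:Z),1));
     ((1,26,26),((- 1%:Z),1));
     ((1,29,29),(1%:Z,1));
     ((1,30,30),(1%:Z,1));
     ((2,0,2),(1%:Z,1));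
     ((2,1,2),(2%:Z,1));
     ((2,9,3),((- 1%:Z),1));
     ((2,10,4),((- 1%:Z),1));
     ((2,11,5),(1%:Z,1));
     ((2,12,6),(1%:Z,1));
     ((2,13,1),((- 1%:Z),1));
     ((2,19,23),((- 1%:Z),1));
     ((2,20,24),((- 1%:Z),1));
     ((2,29,25),(1%:Z,1));
     ((2,30,26),(1%:Z,1));
     ((3,0,3),((- 1%:Z),1));
     ((3,1,3),(1%:Z,1));
     ((3,6,2),((- 1%:Z),1));
     ((3,8,4),(1%:Z,1));
     ((3,11,7),(1%:Z,1));
     ((3,12,0),(1%:Z,1));
     ((3,12,1),((- 1%:Z),1));
     ((3,13,9),(1%:Z,1));
     ((3,21,23),((- 1%:Z),1));
     ((3,22,24),((- 1%:Z),1));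
     ((3,29,27),(1%:Z,1));
     ((3,30,28),(1%:Z,1));
     ((4,1,4),(1%:Z,1));
     ((4,5,2),(3%:Z,2));
     ((4,7,3),(3%:Z,2));
     ((4,8,5),(4%:Z,1));
     ((4,10,7),(4%:Z,1));
     ((4,11,0),((- 1%:Z),2));
     ((4,11,1),(1%:Z,1));
     ((4,12,8),((- 1%:Z),1));
     ((4,13,10),(1%:Z,1));
     ((4,17,23),(2%:Z,1));
     ((4,18,24),(2%:Z,1));
     ((4,19,27),(1%:Z,1));
     ((4,20,28),(1%:Z,1));
     ((4,21,25),((- 1%:Z),1));
     ((4,22,26),((- 1%:Z),1));
     ((4,29,17),((- 1%:Z),1));
     ((4,30,18),((- 1%:Z),1));
     ((5,0,5),(1%:Z,1));
     ((5,1,5),(1%:Z,1));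
     ((5,4,2),((- 3%:Z),2));
     ((5,7,4),(1%:Z,2));
     ((5,8,6),(3%:Z,2));
     ((5,9,7),((- 1%:Z),1));
     ((5,10,0),(1%:Z,2));
     ((5,10,1),(1%:Z,2));
     ((5,11,8),(1%:Z,2));
     ((5,13,11),((- 1%:Z),1));
     ((5,17,25),(1%:Z,1));
     ((5,18,26),(1%:Z,1));
     ((5,19,17),((- 1%:Z),2));
     ((5,20,18),((- 1%:Z),2));
     ((5,27,23),(1%:Z,2));
     ((5,28,24),(1%:Z,2));
     ((5,29,21),((- 1%:Z),2));
     ((5,30,22),((- 1%:Z),2));
     ((6,0,6),(2%:Z,1));
     ((6,1,6),(1%:Z,1));
     ((6,3,2),(1%:Z,1));
     ((6,7,5),(1%:Z,1));
     ((6,9,0),((- 1%:Z),1));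
     ((6,10,8),(1%:Z,1));
     ((6,13,12),((- 1%:Z),1));
     ((6,19,21),((- 1%:Z),1));
     ((6,20,22),((- 1%:Z),1));
     ((6,27,25),(1%:Z,1));
     ((6,28,26),(1%:Z,1));
     ((7,0,7),((- 1%:Z),1));
     ((7,4,3),((- 3%:Z),2));
     ((7,5,4),((- 1%:Z),2));
     ((7,6,5),((- 1%:Z),1));
     ((7,8,0),(1%:Z,1));
     ((7,8,1),((- 1%:Z),2));
     ((7,10,9),((- 3%:Z),2));
     ((7,11,10),(1%:Z,2));
     ((7,12,11),((- 1%:Z),1));
     ((7,17,27),(1%:Z,1));
     ((7,18,28),(1%:Z,1));
     ((7,21,17),((- 1%:Z),2));
     ((7,22,18),((- 1%:Z),2));
     ((7,25,23),((- 1%:Z),2));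
     ((7,26,24),((- 1%:Z),2));
     ((7,29,19),(1%:Z,2));
     ((7,30,20),(1%:Z,2));
     ((8,0,8),(1%:Z,1));
     ((8,3,4),((- 1%:Z),1));
     ((8,4,5),((- 4%:Z),1));
     ((8,5,6),((- 3%:Z),2));
     ((8,7,0),((- 1%:Z),1));
     ((8,7,1),(1%:Z,2));
     ((8,9,10),((- 1%:Z),1));
     ((8,10,11),(4%:Z,1));
     ((8,11,12),((- 3%:Z),2));
     ((8,17,21),((- 2%:Z),1));
     ((8,18,22),((- 2%:Z),1));
     ((8,19,29),(1%:Z,1));
     ((8,20,30),(1%:Z,1));
     ((8,23,25),((- 1%:Z),1));
     ((8,24,26),((- 1%:Z),1));
     ((8,27,17),(1%:Z,1));
     ((8,28,18),(1%:Z,1));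
     ((9,0,9),((- 2%:Z),1));
     ((9,1,9),((- 1%:Z),1));
     ((9,2,3),(1%:Z,1));
     ((9,5,7),(1%:Z,1));
     ((9,6,0),(1%:Z,1));
     ((9,8,10),(1%:Z,1));
     ((9,12,13),((- 1%:Z),1));
     ((9,21,19),((- 1%:Z),1));
     ((9,22,20),((- 1%:Z),1));
     ((9,25,27),(1%:Z,1));
     ((9,26,28),(1%:Z,1));
     ((10,0,10),((- 1%:Z),1));
     ((10,1,10),((- 1%:Z),1));
     ((10,2,4),(1%:Z,1));
     ((10,4,7),((- 4%:Z),1));
     ((10,5,0),((- 1%:Z),2));
     ((10,5,1),((- 1%:Z),2));
     ((10,6,8),((- 1%:Z),1));
     ((10,7,9),(3%:Z,2));
     ((10,8,11),((- 4%:Z),1));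
     ((10,11,13),(3%:Z,2));
     ((10,17,19),(2%:Z,1));
     ((10,18,20),(2%:Z,1));
     ((10,21,29),(1%:Z,1));
     ((10,22,30),(1%:Z,1));
     ((10,23,27),((- 1%:Z),1));
     ((10,24,28),((- 1%:Z),1));
     ((10,25,17),((- 1%:Z),1));
     ((10,26,18),((- 1%:Z),1));
     ((11,1,11),((- 1%:Z),1));
     ((11,2,5),((- 1%:Z),1));
     ((11,3,7),((- 1%:Z),1));
     ((11,4,0),(1%:Z,2));
     ((11,4,1),((- 1%:Z),1));
     ((11,5,8),((- 1%:Z),2));
     ((11,7,10),((- 1%:Z),2));
     ((11,8,12),(3%:Z,2));
     ((11,10,13),((- 3%:Z),2));
     ((11,17,29),(1%:Z,1));
     ((11,18,30),(1%:Z,1));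
     ((11,23,17),((- 1%:Z),2));
     ((11,24,18),((- 1%:Z),2));
     ((11,25,21),(1%:Z,2));
     ((11,26,22),(1%:Z,2));
     ((11,27,19),((- 1%:Z),2));
     ((11,28,20),((- 1%:Z),2));
     ((12,0,12),(1%:Z,1));
     ((12,1,12),((- 1%:Z),1));
     ((12,2,6),((- 1%:Z),1));
     ((12,3,0),((- 1%:Z),1));
     ((12,3,1),(1%:Z,1));
     ((12,4,8),(1%:Z,1));
     ((12,7,11),(1%:Z,1));
     ((12,9,13),(1%:Z,1));
     ((12,23,21),((- 1%:Z),1));
     ((12,24,22),((- 1%:Z),1));
     ((12,27,29),(1%:Z,1));
     ((12,28,30),(1%:Z,1));
     ((13,0,13),((- 1%:Z),1));
     ((13,1,13),((- 2%:Z),1));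
     ((13,2,1),(1%:Z,1));
     ((13,3,9),((- 1%:Z),1));
     ((13,4,10),((- 1%:Z),1));
     ((13,5,11),(1%:Z,1));
     ((13,6,12),(1%:Z,1));
     ((13,23,19),((- 1%:Z),1));
     ((13,24,20),((- 1%:Z),1));
     ((13,25,29),(1%:Z,1));
     ((13,26,30),(1%:Z,1));
     ((14,15,14),((- 2%:Z),1));
     ((14,16,15),(1%:Z,1));
     ((14,18,17),(1%:Z,1));
     ((14,20,19),(1%:Z,1));
     ((14,22,21),(1%:Z,1));
     ((14,24,23),(1%:Z,1));
     ((14,26,25),(1%:Z,1));
     ((14,28,27),(1%:Z,1));
     ((14,30,29),(1%:Z,1));
     ((15,14,14),(2%:Z,1));
     ((15,16,16),((- 2%:Z),1));
     ((15,17,17),(1%:Z,1));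
     ((15,18,18),((- 1%:Z),1));
     ((15,19,19),(1%:Z,1));
     ((15,20,20),((- 1%:Z),1));
     ((15,21,21),(1%:Z,1));
     ((15,22,22),((- 1%:Z),1));
     ((15,23,23),(1%:Z,1));
     ((15,24,24),((- 1%:Z),1));
     ((15,25,25),(1%:Z,1));
     ((15,26,26),((- 1%:Z),1));
     ((15,27,27),(1%:Z,1));
     ((15,28,28),((- 1%:Z),1));
     ((15,29,29),(1%:Z,1));
     ((15,30,30),((- 1%:Z),1));
     ((16,14,15),((- 1%:Z),1));
     ((16,15,16),(2%:Z,1));
     ((16,17,18),(1%:Z,1));
     ((16,19,20),(1%:Z,1));
     ((16,21,22),(1%:Z,1));
     ((16,23,24),(1%:Z,1));
     ((16,25,26),(1%:Z,1));
     ((16,27,28),(1%:Z,1));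
     ((16,29,30),(1%:Z,1));
     ((17,4,23),((- 2%:Z),1));
     ((17,5,25),((- 1%:Z),1));
     ((17,7,27),((- 1%:Z),1));
     ((17,8,21),(2%:Z,1));
     ((17,10,19),((- 2%:Z),1));
     ((17,11,29),((- 1%:Z),1));
     ((17,15,17),((- 1%:Z),1));
     ((17,16,18),((- 1%:Z),1));
     ((17,17,14),((- 8%:Z),3));
     ((17,18,15),(4%:Z,3));
     ((17,20,10),(2%:Z,3));
     ((17,22,8),((- 2%:Z),3));
     ((17,24,4),(2%:Z,3));
     ((17,26,5),(4%:Z,3));
     ((17,28,7),(4%:Z,3));
     ((17,30,11),(4%:Z,3));
     ((18,4,24),((- 2%:Z),1));
     ((18,5,26),((- 1%:Z),1));
     ((18,7,28),((- 1%:Z),1));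
     ((18,8,22),(2%:Z,1));
     ((18,10,20),((- 2%:Z),1));
     ((18,11,30),((- 1%:Z),1));
     ((18,14,17),((- 1%:Z),1));
     ((18,15,18),(1%:Z,1));
     ((18,17,15),(4%:Z,3));
     ((18,18,16),(8%:Z,3));
     ((18,19,10),((- 2%:Z),3));
     ((18,21,8),(2%:Z,3));
     ((18,23,4),((- 2%:Z),3));
     ((18,25,5),((- 4%:Z),3));
     ((18,27,7),((- 4%:Z),3));
     ((18,29,11),((- 4%:Z),3));
     ((19,0,19),((- 1%:Z),1));
     ((19,1,19),((- 1%:Z),1));
     ((19,2,23),(1%:Z,1));
     ((19,4,27),((- 1%:Z),1));
     ((19,5,17),(1%:Z,2));
     ((19,6,21),(1%:Z,1));
     ((19,8,29),((- 1%:Z),1));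
     ((19,15,19),((- 1%:Z),1));
     ((19,16,20),((- 1%:Z),1));
     ((19,18,10),((- 2%:Z),3));
     ((19,22,11),(2%:Z,3));
     ((19,24,7),((- 2%:Z),3));
     ((19,25,14),((- 4%:Z),3));
     ((19,26,0),((- 1%:Z),3));
     ((19,26,1),((- 1%:Z),3));
     ((19,26,15),(2%:Z,3));
     ((19,28,9),(1%:Z,1));
     ((19,30,13),(1%:Z,1));
     ((20,0,20),((- 1%:Z),1));
     ((20,1,20),((- 1%:Z),1));
     ((20,2,24),(1%:Z,1));
     ((20,4,28),((- 1%:Z),1));
     ((20,5,18),(1%:Z,2));
     ((20,6,22),(1%:Z,1));
     ((20,8,30),((- 1%:Z),1));
     ((20,14,19),((- 1%:Z),1));
     ((20,15,20),(1%:Z,1));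
     ((20,17,10),(2%:Z,3));
     ((20,21,11),((- 2%:Z),3));
     ((20,23,7),(2%:Z,3));
     ((20,25,0),(1%:Z,3));
     ((20,25,1),(1%:Z,3));
     ((20,25,15),(2%:Z,3));
     ((20,26,16),(4%:Z,3));
     ((20,27,9),((- 1%:Z),1));
     ((20,29,13),((- 1%:Z),1));
     ((21,0,21),(1%:Z,1));
     ((21,3,23),(1%:Z,1));
     ((21,4,25),(1%:Z,1));
     ((21,7,17),(1%:Z,2));
     ((21,9,19),(1%:Z,1));
     ((21,10,29),((- 1%:Z),1));
     ((21,15,21),((- 1%:Z),1));
     ((21,16,22),((- 1%:Z),1));
     ((21,18,8),(2%:Z,3));
     ((21,20,11),((- 2%:Z),3));
     ((21,24,5),(2%:Z,3));
     ((21,26,6),(1%:Z,1));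
     ((21,27,14),((- 4%:Z),3));
     ((21,28,0),(2%:Z,3));
     ((21,28,1),((- 1%:Z),3));
     ((21,28,15),(2%:Z,3));
     ((21,30,12),(1%:Z,1));
     ((22,0,22),(1%:Z,1));
     ((22,3,24),(1%:Z,1));
     ((22,4,26),(1%:Z,1));
     ((22,7,18),(1%:Z,2));
     ((22,9,20),(1%:Z,1));
     ((22,10,30),((- 1%:Z),1));
     ((22,14,21),((- 1%:Z),1));
     ((22,15,22),(1%:Z,1));
     ((22,17,8),((- 2%:Z),3));
     ((22,19,11),(2%:Z,3));
     ((22,23,5),((- 2%:Z),3));
     ((22,25,6),((- 1%:Z),1));
     ((22,27,0),((- 2%:Z),3));
     ((22,27,1),(1%:Z,3));
     ((22,27,15),(2%:Z,3));
     ((22,28,16),(4%:Z,3));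
     ((22,29,12),((- 1%:Z),1));
     ((23,1,23),(1%:Z,1));
     ((23,8,25),(1%:Z,1));
     ((23,10,27),(1%:Z,1));
     ((23,11,17),(1%:Z,2));
     ((23,12,21),(1%:Z,1));
     ((23,13,19),(1%:Z,1));
     ((23,15,23),((- 1%:Z),1));
     ((23,16,24),((- 1%:Z),1));
     ((23,18,4),((- 2%:Z),3));
     ((23,20,7),(2%:Z,3));
     ((23,22,5),((- 2%:Z),3));
     ((23,26,2),(1%:Z,1));
     ((23,28,3),(1%:Z,1));
     ((23,29,14),((- 4%:Z),3));
     ((23,30,0),((- 1%:Z),3));
     ((23,30,1),(2%:Z,3));
     ((23,30,15),(2%:Z,3));
     ((24,1,24),(1%:Z,1));
     ((24,8,26),(1%:Z,1));
     ((24,10,28),(1%:Z,1));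
     ((24,11,18),(1%:Z,2));
     ((24,12,22),(1%:Z,1));
     ((24,13,20),(1%:Z,1));
     ((24,14,23),((- 1%:Z),1));
     ((24,15,24),(1%:Z,1));
     ((24,17,4),(2%:Z,3));
     ((24,19,7),((- 2%:Z),3));
     ((24,21,5),(2%:Z,3));
     ((24,25,2),((- 1%:Z),1));
     ((24,27,3),((- 1%:Z),1));
     ((24,29,0),(1%:Z,3));
     ((24,29,1),((- 2%:Z),3));
     ((24,29,15),(2%:Z,3));
     ((24,30,16),(4%:Z,3));
     ((25,0,25),(1%:Z,1));
     ((25,1,25),(1%:Z,1));
     ((25,7,23),(1%:Z,2));
     ((25,9,27),((- 1%:Z),1));
     ((25,10,17),(1%:Z,1));
     ((25,11,21),((- 1%:Z),2));
     ((25,13,29),((- 1%:Z),1));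
     ((25,15,25),((- 1%:Z),1));
     ((25,16,26),((- 1%:Z),1));
     ((25,18,5),((- 4%:Z),3));
     ((25,19,14),((- 4%:Z),3));
     ((25,20,0),(1%:Z,3));
     ((25,20,1),(1%:Z,3));
     ((25,20,15),(2%:Z,3));
     ((25,22,6),((- 1%:Z),1));
     ((25,24,2),((- 1%:Z),1));
     ((25,28,4),(1%:Z,3));
     ((25,30,8),(1%:Z,3));
     ((26,0,26),(1%:Z,1));
     ((26,1,26),(1%:Z,1));
     ((26,7,24),(1%:Z,2));
     ((26,9,28),((- 1%:Z),1));
     ((26,10,18),(1%:Z,1));
     ((26,11,22),((- 1%:Z),2));
     ((26,13,30),((- 1%:Z),1));
     ((26,14,25),((- 1%:Z),1));
     ((26,15,26),(1%:Z,1));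
     ((26,17,5),(4%:Z,3));
     ((26,19,0),((- 1%:Z),3));
     ((26,19,1),((- 1%:Z),3));
     ((26,19,15),(2%:Z,3));
     ((26,20,16),(4%:Z,3));
     ((26,21,6),(1%:Z,1));
     ((26,23,2),(1%:Z,1));
     ((26,27,4),((- 1%:Z),3));
     ((26,29,8),((- 1%:Z),3));
     ((27,0,27),((- 1%:Z),1));
     ((27,5,23),((- 1%:Z),2));
     ((27,6,25),((- 1%:Z),1));
     ((27,8,17),((- 1%:Z),1));
     ((27,11,19),(1%:Z,2));
     ((27,12,29),((- 1%:Z),1));
     ((27,15,27),((- 1%:Z),1));
     ((27,16,28),((- 1%:Z),1));
     ((27,18,7),((- 4%:Z),3));
     ((27,20,9),((- 1%:Z),1));
     ((27,21,14),((- 4%:Z),3));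
     ((27,22,0),((- 2%:Z),3));
     ((27,22,1),(1%:Z,3));
     ((27,22,15),(2%:Z,3));
     ((27,24,3),((- 1%:Z),1));
     ((27,26,4),((- 1%:Z),3));
     ((27,30,10),(1%:Z,3));
     ((28,0,28),((- 1%:Z),1));
     ((28,5,24),((- 1%:Z),2));
     ((28,6,26),((- 1%:Z),1));
     ((28,8,18),((- 1%:Z),1));
     ((28,11,20),(1%:Z,2));
     ((28,12,30),((- 1%:Z),1));
     ((28,14,27),((- 1%:Z),1));
     ((28,15,28),(1%:Z,1));
     ((28,17,7),(4%:Z,3));
     ((28,19,9),(1%:Z,1));
     ((28,21,0),(2%:Z,3));
     ((28,21,1),((- 1%:Z),3));
     ((28,21,15),(2%:Z,3));
     ((28,22,16),(4%:Z,3));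
     ((28,23,3),(1%:Z,1));
     ((28,25,4),(1%:Z,3));
     ((28,29,10),((- 1%:Z),3));
     ((29,1,29),((- 1%:Z),1));
     ((29,2,25),((- 1%:Z),1));
     ((29,3,27),((- 1%:Z),1));
     ((29,4,17),(1%:Z,1));
     ((29,5,21),(1%:Z,2));
     ((29,7,19),((- 1%:Z),2));
     ((29,15,29),((- 1%:Z),1));
     ((29,16,30),((- 1%:Z),1));
     ((29,18,11),((- 4%:Z),3));
     ((29,20,13),((- 1%:Z),1));
     ((29,22,12),((- 1%:Z),1));
     ((29,23,14),((- 4%:Z),3));
     ((29,24,0),(1%:Z,3));
     ((29,24,1),((- 2%:Z),3));
     ((29,24,15),(2%:Z,3));
     ((29,26,8),((- 1%:Z),3));
     ((29,28,10),((- 1%:Z),3));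
     ((30,1,30),((- 1%:Z),1));
     ((30,2,26),((- 1%:Z),1));
     ((30,3,28),((- 1%:Z),1));
     ((30,4,18),(1%:Z,1));
     ((30,5,22),(1%:Z,2));
     ((30,7,20),((- 1%:Z),2));
     ((30,14,29),((- 1%:Z),1));
     ((30,15,30),(1%:Z,1));
     ((30,17,11),(4%:Z,3));
     ((30,19,13),(1%:Z,1));
     ((30,21,12),(1%:Z,1));
     ((30,23,0),((- 1%:Z),3));
     ((30,23,1),(2%:Z,3));
     ((30,23,15),(2%:Z,3));
     ((30,24,16),(4%:Z,3));
     ((30,25,8),(1%:Z,3));
     ((30,27,10),(1%:Z,3))].

Definition g3_weights : seq (int * int * int) :=
  [:: (0%:Z,0%:Z,0%:Z);
     (0%:Z,0%:Z,0%:Z);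
     (0%:Z,(- 2%:Z),(- 1%:Z));
     (0%:Z,(- 1%:Z),(- 2%:Z));
     (0%:Z,(- 1%:Z),(- 1%:Z));
     (0%:Z,(- 1%:Z),0%:Z);
     (0%:Z,(- 1%:Z),1%:Z);
     (0%:Z,0%:Z,(- 1%:Z));
     (0%:Z,0%:Z,1%:Z);
     (0%:Z,1%:Z,(- 1%:Z));
     (0%:Z,1%:Z,0%:Z);
     (0%:Z,1%:Z,1%:Z);
     (0%:Z,1%:Z,2%:Z);
     (0%:Z,2%:Z,1%:Z);
     (2%:Z,0%:Z,0%:Z);
     (0%:Z,0%:Z,0%:Z);
     ((- 2%:Z),0%:Z,0%:Z);
     (1%:Z,0%:Z,0%:Z);
     ((- 1%:Z),0%:Z,0%:Z);
     (1%:Z,1%:Z,0%:Z);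
     ((- 1%:Z),1%:Z,0%:Z);
     (1%:Z,0%:Z,1%:Z);
     ((- 1%:Z),0%:Z,1%:Z);
     (1%:Z,(- 1%:Z),(- 1%:Z));
     ((- 1%:Z),(- 1%:Z),(- 1%:Z));
     (1%:Z,(- 1%:Z),0%:Z);
     ((- 1%:Z),(- 1%:Z),0%:Z);
     (1%:Z,0%:Z,(- 1%:Z));
     ((- 1%:Z),0%:Z,(- 1%:Z));
     (1%:Z,1%:Z,1%:Z);
     ((- 1%:Z),1%:Z,1%:Z)].

Definition G3dim : nat := 31.
Notation idx := 'I_G3dim.

(* parity of the basis vector e_i : true = odd *)
Definition par (i : idx) : bool := (17 <= i)%N.

Definition wt (i : idx) : int * int * int := nth (0, 0, 0) g3_weights i.
Definition deg (i : idx) : int := (wt i).1.2 + (wt i).2.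

Definition g3c (C : fieldType) (i j k : idx) : C :=
  \sum_(t <- g3_table | t.1 == (nat_of_ord i, nat_of_ord j, nat_of_ord k))
     ((t.2.1)%:~R / (t.2.2)%:R).

(* sp(2) inside g_0 : the span of e_14, e_15, e_16.  Elements of g are
   coordinate row vectors. *)
Definition in_sp2 (C : fieldType) (X : 'rV[C]_G3dim) : Prop :=
  forall j : idx, ~~ (14 <= j <= 16)%N -> X 0 j = 0.

(* m = g_{-3} + g_{-2} + g_{-1} is spanned by the e_i with deg i < 0.
   A 1-cochain phi : m -> g is a matrix: phi(e_i) = \sum_k phi i k e_k
   (rows i with deg i >= 0 are required to vanish).
   C^{d,1}(m_1bar, g): 1-cochains vanishing on m_0bar, of degree d, i.e.
   mapping g_j into g_{j+d}. *)
Definition cochain1 (C : fieldType) (d : int) (phi : 'M[C]_G3dim) : Prop :=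
  forall i k : idx, phi i k != 0 -> [/\ deg i < 0, par i & deg k = deg i + d].

(* Chevalley-Eilenberg differential C^1(m,g) -> C^2(m,g) for the Lie
   superalgebra m with coefficients in the adjoint module; for a homogeneous
   phi of parity |phi|:
     (d phi)(x,y) = (-1)^{|phi||x|}[x,phi y] - (-1)^{|y|(|phi|+|x|)}[y,phi x]
                    - phi [x,y],
   extended linearly (the entry phi j l has parity par j + par l).
   (d phi) i j k is the e_k-coefficient of (d phi)(e_i, e_j). *)
Definition dcoc (C : fieldType) (phi : 'M[C]_G3dim) (i j k : idx) : C :=
  \sum_(l : idx) (-1) ^+ ((par j (+) par l) && par i) * phi j l * g3c C i l k
  - \sum_(l : idx) (-1) ^+ (par j && par l) * phi i l * g3c C j l k
  - \sum_(l : idx) g3c C i j l * phi l k.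

Definition cocycle1 (C : fieldType) (phi : 'M[C]_G3dim) : Prop :=
  forall i j k : idx, deg i < 0 -> deg j < 0 -> dcoc phi i j k = 0.

Definition Z1 (C : fieldType) (d : int) (phi : 'M[C]_G3dim) : Prop :=
  cochain1 d phi /\ cocycle1 phi.

(* B^{d,1}(m_1bar, g) = d(C^{d,0}(m_1bar, g)) = d(0) = 0, since
   C^0(m_1bar, g) = 0 by definition. *)
Definition B1 (C : fieldType) (d : int) (phi : 'M[C]_G3dim) : Prop :=
  phi = 0.

Definition cohomologous (C : fieldType) (d : int) (phi psi : 'M[C]_G3dim) : Prop :=
  B1 d (phi - psi).

Definition ad_m (C : fieldType) (X : 'rV[C]_G3dim) : 'M[C]_G3dim :=
  \matrix_(i, k) (if deg i < 0 then \sum_(j : idx) X 0 j * g3c C j i k else 0).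

(* Main.v *)
Require Import Defs.
From HB Require Import structures.
From mathcomp Require Import all_boot all_order all_algebra.
From mathcomp Require Import zify.
Import Order.TTheory GRing.Theory Num.Theory.
Local Open Scope ring_scope.

Definition mkq (p : int) (q : nat) : rat := p%:~R / q%:R.

Definition gQ (i j k : nat) : rat :=
  foldr (fun t acc => if t.1 == (i, j, k) then mkq t.2.1 t.2.2 + acc else acc)
    0 g3_table.
Definition gL (i j k : nat) : rat :=
  match i with
  | 0%N => match j with
    | 2%N => match k with | 2%N => mkq (- 1%:Z) 1%N | _ => 0 end
    | 3%N => match k with | 3%N => mkq (1%:Z) 1%N | _ => 0 end
    | 5%N => match k with | 5%N => mkq (- 1%:Z) 1%N | _ => 0 end
    | 6%N => match k with | 6%N => mkq (- 2%:Z) 1%N | _ => 0 end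
    | 7%N => match k with | 7%N => mkq (1%:Z) 1%N | _ => 0 end
    | 8%N => match k with | 8%N => mkq (- 1%:Z) 1%N | _ => 0 end
    | 9%N => match k with | 9%N => mkq (2%:Z) 1%N | _ => 0 end
    | 10%N => match k with | 10%N => mkq (1%:Z) 1%N | _ => 0 end
    | 12%N => match k with | 12%N => mkq (- 1%:Z) 1%N | _ => 0 end
    | 13%N => match k with | 13%N => mkq (1%:Z) 1%N | _ => 0 end
    | 19%N => match k with | 19%N => mkq (1%:Z) 1%N | _ => 0 end
    | 20%N => match k with | 20%N => mkq (1%:Z) 1%N | _ => 0 end
    | 21%N => match k with | 21%N => mkq (- 1%:Z) 1%N | _ => 0 end
    | 22%N => match k with | 22%N => mkq (- 1%:Z) 1%N | _ => 0 end
    | 25%N => match k with | 25%N => mkq (- 1%:Z) 1%N | _ => 0 end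
    | 26%N => match k with | 26%N => mkq (- 1%:Z) 1%N | _ => 0 end
    | 27%N => match k with | 27%N => mkq (1%:Z) 1%N | _ => 0 end
    | 28%N => match k with | 28%N => mkq (1%:Z) 1%N | _ => 0 end
    | _ => 0 end
  | 1%N => match j with
    | 2%N => match k with | 2%N => mkq (- 2%:Z) 1%N | _ => 0 end
    | 3%N => match k with | 3%N => mkq (- 1%:Z) 1%N | _ => 0 end
    | 4%N => match k with | 4%N => mkq (- 1%:Z) 1%N | _ => 0 end
    | 5%N => match k with | 5%N => mkq (- 1%:Z) 1%N | _ => 0 end
    | 6%N => match k with | 6%N => mkq (- 1%:Z) 1%N | _ => 0 end
    | 9%N => match k with | 9%N => mkq (1%:Z) 1%N | _ => 0 end
    | 10%N => match k with | 10%N => mkq (1%:Z) 1%N | _ => 0 end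
    | 11%N => match k with | 11%N => mkq (1%:Z) 1%N | _ => 0 end
    | 12%N => match k with | 12%N => mkq (1%:Z) 1%N | _ => 0 end
    | 13%N => match k with | 13%N => mkq (2%:Z) 1%N | _ => 0 end
    | 19%N => match k with | 19%N => mkq (1%:Z) 1%N | _ => 0 end
    | 20%N => match k with | 20%N => mkq (1%:Z) 1%N | _ => 0 end
    | 23%N => match k with | 23%N => mkq (- 1%:Z) 1%N | _ => 0 end
    | 24%N => match k with | 24%N => mkq (- 1%:Z) 1%N | _ => 0 end
    | 25%N => match k with | 25%N => mkq (- 1%:Z) 1%N | _ => 0 end
    | 26%N => match k with | 26%N => mkq (- 1%:Z) 1%N | _ => 0 end
    | 29%N => match k with | 29%N => mkq (1%:Z) 1%N | _ => 0 end
    | 30%N => match k with | 30%N => mkq (1%:Z) 1%N | _ => 0 end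
    | _ => 0 end
  | 2%N => match j with
    | 0%N => match k with | 2%N => mkq (1%:Z) 1%N | _ => 0 end
    | 1%N => match k with | 2%N => mkq (2%:Z) 1%N | _ => 0 end
    | 9%N => match k with | 3%N => mkq (- 1%:Z) 1%N | _ => 0 end
    | 10%N => match k with | 4%N => mkq (- 1%:Z) 1%N | _ => 0 end
    | 11%N => match k with | 5%N => mkq (1%:Z) 1%N | _ => 0 end
    | 12%N => match k with | 6%N => mkq (1%:Z) 1%N | _ => 0 end
    | 13%N => match k with | 1%N => mkq (- 1%:Z) 1%N | _ => 0 end
    | 19%N => match k with | 23%N => mkq (- 1%:Z) 1%N | _ => 0 end
    | 20%N => match k with | 24%N => mkq (- 1%:Z) 1%N | _ => 0 end
    | 29%N => match k with | 25%N => mkq (1%:Z) 1%N | _ => 0 end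
    | 30%N => match k with | 26%N => mkq (1%:Z) 1%N | _ => 0 end
    | _ => 0 end
  | 3%N => match j with
    | 0%N => match k with | 3%N => mkq (- 1%:Z) 1%N | _ => 0 end
    | 1%N => match k with | 3%N => mkq (1%:Z) 1%N | _ => 0 end
    | 6%N => match k with | 2%N => mkq (- 1%:Z) 1%N | _ => 0 end
    | 8%N => match k with | 4%N => mkq (1%:Z) 1%N | _ => 0 end
    | 11%N => match k with | 7%N => mkq (1%:Z) 1%N | _ => 0 end
    | 12%N => match k with | 0%N => mkq (1%:Z) 1%N | 1%N => mkq (- 1%:Z) 1%N | _ => 0 end
    | 13%N => match k with | 9%N => mkq (1%:Z) 1%N | _ => 0 end
    | 21%N => match k with | 23%N => mkq (- 1%:Z) 1%N | _ => 0 end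
    | 22%N => match k with | 24%N => mkq (- 1%:Z) 1%N | _ => 0 end
    | 29%N => match k with | 27%N => mkq (1%:Z) 1%N | _ => 0 end
    | 30%N => match k with | 28%N => mkq (1%:Z) 1%N | _ => 0 end
    | _ => 0 end
  | 4%N => match j with
    | 1%N => match k with | 4%N => mkq (1%:Z) 1%N | _ => 0 end
    | 5%N => match k with | 2%N => mkq (3%:Z) 2%N | _ => 0 end
    | 7%N => match k with | 3%N => mkq (3%:Z) 2%N | _ => 0 end
    | 8%N => match k with | 5%N => mkq (4%:Z) 1%N | _ => 0 end
    | 10%N => match k with | 7%N => mkq (4%:Z) 1%N | _ => 0 end
    | 11%N => match k with | 0%N => mkq (- 1%:Z) 2%N | 1%N => mkq (1%:Z) 1%N | _ => 0 end
    | 12%N => match k with | 8%N => mkq (- 1%:Z) 1%N | _ => 0 end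
    | 13%N => match k with | 10%N => mkq (1%:Z) 1%N | _ => 0 end
    | 17%N => match k with | 23%N => mkq (2%:Z) 1%N | _ => 0 end
    | 18%N => match k with | 24%N => mkq (2%:Z) 1%N | _ => 0 end
    | 19%N => match k with | 27%N => mkq (1%:Z) 1%N | _ => 0 end
    | 20%N => match k with | 28%N => mkq (1%:Z) 1%N | _ => 0 end
    | 21%N => match k with | 25%N => mkq (- 1%:Z) 1%N | _ => 0 end
    | 22%N => match k with | 26%N => mkq (- 1%:Z) 1%N | _ => 0 end
    | 29%N => match k with | 17%N => mkq (- 1%:Z) 1%N | _ => 0 end
    | 30%N => match k with | 18%N => mkq (- 1%:Z) 1%N | _ => 0 end
    | _ => 0 end
  | 5%N => match j with
    | 0%N => match k with | 5%N => mkq (1%:Z) 1%N | _ => 0 end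
    | 1%N => match k with | 5%N => mkq (1%:Z) 1%N | _ => 0 end
    | 4%N => match k with | 2%N => mkq (- 3%:Z) 2%N | _ => 0 end
    | 7%N => match k with | 4%N => mkq (1%:Z) 2%N | _ => 0 end
    | 8%N => match k with | 6%N => mkq (3%:Z) 2%N | _ => 0 end
    | 9%N => match k with | 7%N => mkq (- 1%:Z) 1%N | _ => 0 end
    | 10%N => match k with | 0%N => mkq (1%:Z) 2%N | 1%N => mkq (1%:Z) 2%N | _ => 0 end
    | 11%N => match k with | 8%N => mkq (1%:Z) 2%N | _ => 0 end
    | 13%N => match k with | 11%N => mkq (- 1%:Z) 1%N | _ => 0 end
    | 17%N => match k with | 25%N => mkq (1%:Z) 1%N | _ => 0 end
    | 18%N => match k with | 26%N => mkq (1%:Z) 1%N | _ => 0 end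
    | 19%N => match k with | 17%N => mkq (- 1%:Z) 2%N | _ => 0 end
    | 20%N => match k with | 18%N => mkq (- 1%:Z) 2%N | _ => 0 end
    | 27%N => match k with | 23%N => mkq (1%:Z) 2%N | _ => 0 end
    | 28%N => match k with | 24%N => mkq (1%:Z) 2%N | _ => 0 end
    | 29%N => match k with | 21%N => mkq (- 1%:Z) 2%N | _ => 0 end
    | 30%N => match k with | 22%N => mkq (- 1%:Z) 2%N | _ => 0 end
    | _ => 0 end
  | 6%N => match j with
    | 0%N => match k with | 6%N => mkq (2%:Z) 1%N | _ => 0 end
    | 1%N => match k with | 6%N => mkq (1%:Z) 1%N | _ => 0 end
    | 3%N => match k with | 2%N => mkq (1%:Z) 1%N | _ => 0 end
    | 7%N => match k with | 5%N => mkq (1%:Z) 1%N | _ => 0 end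
    | 9%N => match k with | 0%N => mkq (- 1%:Z) 1%N | _ => 0 end
    | 10%N => match k with | 8%N => mkq (1%:Z) 1%N | _ => 0 end
    | 13%N => match k with | 12%N => mkq (- 1%:Z) 1%N | _ => 0 end
    | 19%N => match k with | 21%N => mkq (- 1%:Z) 1%N | _ => 0 end
    | 20%N => match k with | 22%N => mkq (- 1%:Z) 1%N | _ => 0 end
    | 27%N => match k with | 25%N => mkq (1%:Z) 1%N | _ => 0 end
    | 28%N => match k with | 26%N => mkq (1%:Z) 1%N | _ => 0 end
    | _ => 0 end
  | 7%N => match j with
    | 0%N => match k with | 7%N => mkq (- 1%:Z) 1%N | _ => 0 end
    | 4%N => match k with | 3%N => mkq (- 3%:Z) 2%N | _ => 0 end
    | 5%N => match k with | 4%N => mkq (- 1%:Z) 2%N | _ => 0 end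
    | 6%N => match k with | 5%N => mkq (- 1%:Z) 1%N | _ => 0 end
    | 8%N => match k with | 0%N => mkq (1%:Z) 1%N | 1%N => mkq (- 1%:Z) 2%N | _ => 0 end
    | 10%N => match k with | 9%N => mkq (- 3%:Z) 2%N | _ => 0 end
    | 11%N => match k with | 10%N => mkq (1%:Z) 2%N | _ => 0 end
    | 12%N => match k with | 11%N => mkq (- 1%:Z) 1%N | _ => 0 end
    | 17%N => match k with | 27%N => mkq (1%:Z) 1%N | _ => 0 end
    | 18%N => match k with | 28%N => mkq (1%:Z) 1%N | _ => 0 end
    | 21%N => match k with | 17%N => mkq (- 1%:Z) 2%N | _ => 0 end
    | 22%N => match k with | 18%N => mkq (- 1%:Z) 2%N | _ => 0 end
    | 25%N => match k with | 23%N => mkq (- 1%:Z) 2%N | _ => 0 end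
    | 26%N => match k with | 24%N => mkq (- 1%:Z) 2%N | _ => 0 end
    | 29%N => match k with | 19%N => mkq (1%:Z) 2%N | _ => 0 end
    | 30%N => match k with | 20%N => mkq (1%:Z) 2%N | _ => 0 end
    | _ => 0 end
  | 8%N => match j with
    | 0%N => match k with | 8%N => mkq (1%:Z) 1%N | _ => 0 end
    | 3%N => match k with | 4%N => mkq (- 1%:Z) 1%N | _ => 0 end
    | 4%N => match k with | 5%N => mkq (- 4%:Z) 1%N | _ => 0 end
    | 5%N => match k with | 6%N => mkq (- 3%:Z) 2%N | _ => 0 end
    | 7%N => match k with | 0%N => mkq (- 1%:Z) 1%N | 1%N => mkq (1%:Z) 2%N | _ => 0 end
    | 9%N => match k with | 10%N => mkq (- 1%:Z) 1%N | _ => 0 end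
    | 10%N => match k with | 11%N => mkq (4%:Z) 1%N | _ => 0 end
    | 11%N => match k with | 12%N => mkq (- 3%:Z) 2%N | _ => 0 end
    | 17%N => match k with | 21%N => mkq (- 2%:Z) 1%N | _ => 0 end
    | 18%N => match k with | 22%N => mkq (- 2%:Z) 1%N | _ => 0 end
    | 19%N => match k with | 29%N => mkq (1%:Z) 1%N | _ => 0 end
    | 20%N => match k with | 30%N => mkq (1%:Z) 1%N | _ => 0 end
    | 23%N => match k with | 25%N => mkq (- 1%:Z) 1%N | _ => 0 end
    | 24%N => match k with | 26%N => mkq (- 1%:Z) 1%N | _ => 0 end
    | 27%N => match k with | 17%N => mkq (1%:Z) 1%N | _ => 0 end
    | 28%N => match k with | 18%N => mkq (1%:Z) 1%N | _ => 0 end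
    | _ => 0 end
  | 9%N => match j with
    | 0%N => match k with | 9%N => mkq (- 2%:Z) 1%N | _ => 0 end
    | 1%N => match k with | 9%N => mkq (- 1%:Z) 1%N | _ => 0 end
    | 2%N => match k with | 3%N => mkq (1%:Z) 1%N | _ => 0 end
    | 5%N => match k with | 7%N => mkq (1%:Z) 1%N | _ => 0 end
    | 6%N => match k with | 0%N => mkq (1%:Z) 1%N | _ => 0 end
    | 8%N => match k with | 10%N => mkq (1%:Z) 1%N | _ => 0 end
    | 12%N => match k with | 13%N => mkq (- 1%:Z) 1%N | _ => 0 end
    | 21%N => match k with | 19%N => mkq (- 1%:Z) 1%N | _ => 0 end
    | 22%N => match k with | 20%N => mkq (- 1%:Z) 1%N | _ => 0 end
    | 25%N => match k with | 27%N => mkq (1%:Z) 1%N | _ => 0 end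
    | 26%N => match k with | 28%N => mkq (1%:Z) 1%N | _ => 0 end
    | _ => 0 end
  | 10%N => match j with
    | 0%N => match k with | 10%N => mkq (- 1%:Z) 1%N | _ => 0 end
    | 1%N => match k with | 10%N => mkq (- 1%:Z) 1%N | _ => 0 end
    | 2%N => match k with | 4%N => mkq (1%:Z) 1%N | _ => 0 end
    | 4%N => match k with | 7%N => mkq (- 4%:Z) 1%N | _ => 0 end
    | 5%N => match k with | 0%N => mkq (- 1%:Z) 2%N | 1%N => mkq (- 1%:Z) 2%N | _ => 0 end
    | 6%N => match k with | 8%N => mkq (- 1%:Z) 1%N | _ => 0 end
    | 7%N => match k with | 9%N => mkq (3%:Z) 2%N | _ => 0 end
    | 8%N => match k with | 11%N => mkq (- 4%:Z) 1%N | _ => 0 end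
    | 11%N => match k with | 13%N => mkq (3%:Z) 2%N | _ => 0 end
    | 17%N => match k with | 19%N => mkq (2%:Z) 1%N | _ => 0 end
    | 18%N => match k with | 20%N => mkq (2%:Z) 1%N | _ => 0 end
    | 21%N => match k with | 29%N => mkq (1%:Z) 1%N | _ => 0 end
    | 22%N => match k with | 30%N => mkq (1%:Z) 1%N | _ => 0 end
    | 23%N => match k with | 27%N => mkq (- 1%:Z) 1%N | _ => 0 end
    | 24%N => match k with | 28%N => mkq (- 1%:Z) 1%N | _ => 0 end
    | 25%N => match k with | 17%N => mkq (- 1%:Z) 1%N | _ => 0 end
    | 26%N => match k with | 18%N => mkq (- 1%:Z) 1%N | _ => 0 end
    | _ => 0 end
  | 11%N => match j with
    | 1%N => match k with | 11%N => mkq (- 1%:Z) 1%N | _ => 0 end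
    | 2%N => match k with | 5%N => mkq (- 1%:Z) 1%N | _ => 0 end
    | 3%N => match k with | 7%N => mkq (- 1%:Z) 1%N | _ => 0 end
    | 4%N => match k with | 0%N => mkq (1%:Z) 2%N | 1%N => mkq (- 1%:Z) 1%N | _ => 0 end
    | 5%N => match k with | 8%N => mkq (- 1%:Z) 2%N | _ => 0 end
    | 7%N => match k with | 10%N => mkq (- 1%:Z) 2%N | _ => 0 end
    | 8%N => match k with | 12%N => mkq (3%:Z) 2%N | _ => 0 end
    | 10%N => match k with | 13%N => mkq (- 3%:Z) 2%N | _ => 0 end
    | 17%N => match k with | 29%N => mkq (1%:Z) 1%N | _ => 0 end
    | 18%N => match k with | 30%N => mkq (1%:Z) 1%N | _ => 0 end
    | 23%N => match k with | 17%N => mkq (- 1%:Z) 2%N | _ => 0 end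
    | 24%N => match k with | 18%N => mkq (- 1%:Z) 2%N | _ => 0 end
    | 25%N => match k with | 21%N => mkq (1%:Z) 2%N | _ => 0 end
    | 26%N => match k with | 22%N => mkq (1%:Z) 2%N | _ => 0 end
    | 27%N => match k with | 19%N => mkq (- 1%:Z) 2%N | _ => 0 end
    | 28%N => match k with | 20%N => mkq (- 1%:Z) 2%N | _ => 0 end
    | _ => 0 end
  | 12%N => match j with
    | 0%N => match k with | 12%N => mkq (1%:Z) 1%N | _ => 0 end
    | 1%N => match k with | 12%N => mkq (- 1%:Z) 1%N | _ => 0 end
    | 2%N => match k with | 6%N => mkq (- 1%:Z) 1%N | _ => 0 end
    | 3%N => match k with | 0%N => mkq (- 1%:Z) 1%N | 1%N => mkq (1%:Z) 1%N | _ => 0 end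
    | 4%N => match k with | 8%N => mkq (1%:Z) 1%N | _ => 0 end
    | 7%N => match k with | 11%N => mkq (1%:Z) 1%N | _ => 0 end
    | 9%N => match k with | 13%N => mkq (1%:Z) 1%N | _ => 0 end
    | 23%N => match k with | 21%N => mkq (- 1%:Z) 1%N | _ => 0 end
    | 24%N => match k with | 22%N => mkq (- 1%:Z) 1%N | _ => 0 end
    | 27%N => match k with | 29%N => mkq (1%:Z) 1%N | _ => 0 end
    | 28%N => match k with | 30%N => mkq (1%:Z) 1%N | _ => 0 end
    | _ => 0 end
  | 13%N => match j with
    | 0%N => match k with | 13%N => mkq (- 1%:Z) 1%N | _ => 0 end
    | 1%N => match k with | 13%N => mkq (- 2%:Z) 1%N | _ => 0 end
    | 2%N => match k with | 1%N => mkq (1%:Z) 1%N | _ => 0 end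
    | 3%N => match k with | 9%N => mkq (- 1%:Z) 1%N | _ => 0 end
    | 4%N => match k with | 10%N => mkq (- 1%:Z) 1%N | _ => 0 end
    | 5%N => match k with | 11%N => mkq (1%:Z) 1%N | _ => 0 end
    | 6%N => match k with | 12%N => mkq (1%:Z) 1%N | _ => 0 end
    | 23%N => match k with | 19%N => mkq (- 1%:Z) 1%N | _ => 0 end
    | 24%N => match k with | 20%N => mkq (- 1%:Z) 1%N | _ => 0 end
    | 25%N => match k with | 29%N => mkq (1%:Z) 1%N | _ => 0 end
    | 26%N => match k with | 30%N => mkq (1%:Z) 1%N | _ => 0 end
    | _ => 0 end
  | 14%N => match j with
    | 15%N => match k with | 14%N => mkq (- 2%:Z) 1%N | _ => 0 end
    | 16%N => match k with | 15%N => mkq (1%:Z) 1%N | _ => 0 end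
    | 18%N => match k with | 17%N => mkq (1%:Z) 1%N | _ => 0 end
    | 20%N => match k with | 19%N => mkq (1%:Z) 1%N | _ => 0 end
    | 22%N => match k with | 21%N => mkq (1%:Z) 1%N | _ => 0 end
    | 24%N => match k with | 23%N => mkq (1%:Z) 1%N | _ => 0 end
    | 26%N => match k with | 25%N => mkq (1%:Z) 1%N | _ => 0 end
    | 28%N => match k with | 27%N => mkq (1%:Z) 1%N | _ => 0 end
    | 30%N => match k with | 29%N => mkq (1%:Z) 1%N | _ => 0 end
    | _ => 0 end
  | 15%N => match j with
    | 14%N => match k with | 14%N => mkq (2%:Z) 1%N | _ => 0 end
    | 16%N => match k with | 16%N => mkq (- 2%:Z) 1%N | _ => 0 end
    | 17%N => match k with | 17%N => mkq (1%:Z) 1%N | _ => 0 end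
    | 18%N => match k with | 18%N => mkq (- 1%:Z) 1%N | _ => 0 end
    | 19%N => match k with | 19%N => mkq (1%:Z) 1%N | _ => 0 end
    | 20%N => match k with | 20%N => mkq (- 1%:Z) 1%N | _ => 0 end
    | 21%N => match k with | 21%N => mkq (1%:Z) 1%N | _ => 0 end
    | 22%N => match k with | 22%N => mkq (- 1%:Z) 1%N | _ => 0 end
    | 23%N => match k with | 23%N => mkq (1%:Z) 1%N | _ => 0 end
    | 24%N => match k with | 24%N => mkq (- 1%:Z) 1%N | _ => 0 end
    | 25%N => match k with | 25%N => mkq (1%:Z) 1%N | _ => 0 end
    | 26%N => match k with | 26%N => mkq (- 1%:Z) 1%N | _ => 0 end
    | 27%N => match k with | 27%N => mkq (1%:Z) 1%N | _ => 0 end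
    | 28%N => match k with | 28%N => mkq (- 1%:Z) 1%N | _ => 0 end
    | 29%N => match k with | 29%N => mkq (1%:Z) 1%N | _ => 0 end
    | 30%N => match k with | 30%N => mkq (- 1%:Z) 1%N | _ => 0 end
    | _ => 0 end
  | 16%N => match j with
    | 14%N => match k with | 15%N => mkq (- 1%:Z) 1%N | _ => 0 end
    | 15%N => match k with | 16%N => mkq (2%:Z) 1%N | _ => 0 end
    | 17%N => match k with | 18%N => mkq (1%:Z) 1%N | _ => 0 end
    | 19%N => match k with | 20%N => mkq (1%:Z) 1%N | _ => 0 end
    | 21%N => match k with | 22%N => mkq (1%:Z) 1%N | _ => 0 end
    | 23%N => match k with | 24%N => mkq (1%:Z) 1%N | _ => 0 end
    | 25%N => match k with | 26%N => mkq (1%:Z) 1%N | _ => 0 end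
    | 27%N => match k with | 28%N => mkq (1%:Z) 1%N | _ => 0 end
    | 29%N => match k with | 30%N => mkq (1%:Z) 1%N | _ => 0 end
    | _ => 0 end
  | 17%N => match j with
    | 4%N => match k with | 23%N => mkq (- 2%:Z) 1%N | _ => 0 end
    | 5%N => match k with | 25%N => mkq (- 1%:Z) 1%N | _ => 0 end
    | 7%N => match k with | 27%N => mkq (- 1%:Z) 1%N | _ => 0 end
    | 8%N => match k with | 21%N => mkq (2%:Z) 1%N | _ => 0 end
    | 10%N => match k with | 19%N => mkq (- 2%:Z) 1%N | _ => 0 end
    | 11%N => match k with | 29%N => mkq (- 1%:Z) 1%N | _ => 0 end
    | 15%N => match k with | 17%N => mkq (- 1%:Z) 1%N | _ => 0 end
    | 16%N => match k with | 18%N => mkq (- 1%:Z) 1%N | _ => 0 end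
    | 17%N => match k with | 14%N => mkq (- 8%:Z) 3%N | _ => 0 end
    | 18%N => match k with | 15%N => mkq (4%:Z) 3%N | _ => 0 end
    | 20%N => match k with | 10%N => mkq (2%:Z) 3%N | _ => 0 end
    | 22%N => match k with | 8%N => mkq (- 2%:Z) 3%N | _ => 0 end
    | 24%N => match k with | 4%N => mkq (2%:Z) 3%N | _ => 0 end
    | 26%N => match k with | 5%N => mkq (4%:Z) 3%N | _ => 0 end
    | 28%N => match k with | 7%N => mkq (4%:Z) 3%N | _ => 0 end
    | 30%N => match k with | 11%N => mkq (4%:Z) 3%N | _ => 0 end
    | _ => 0 end
  | 18%N => match j with
    | 4%N => match k with | 24%N => mkq (- 2%:Z) 1%N | _ => 0 end
    | 5%N => match k with | 26%N => mkq (- 1%:Z) 1%N | _ => 0 end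
    | 7%N => match k with | 28%N => mkq (- 1%:Z) 1%N | _ => 0 end
    | 8%N => match k with | 22%N => mkq (2%:Z) 1%N | _ => 0 end
    | 10%N => match k with | 20%N => mkq (- 2%:Z) 1%N | _ => 0 end
    | 11%N => match k with | 30%N => mkq (- 1%:Z) 1%N | _ => 0 end
    | 14%N => match k with | 17%N => mkq (- 1%:Z) 1%N | _ => 0 end
    | 15%N => match k with | 18%N => mkq (1%:Z) 1%N | _ => 0 end
    | 17%N => match k with | 15%N => mkq (4%:Z) 3%N | _ => 0 end
    | 18%N => match k with | 16%N => mkq (8%:Z) 3%N | _ => 0 end
    | 19%N => match k with | 10%N => mkq (- 2%:Z) 3%N | _ => 0 end
    | 21%N => match k with | 8%N => mkq (2%:Z) 3%N | _ => 0 end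
    | 23%N => match k with | 4%N => mkq (- 2%:Z) 3%N | _ => 0 end
    | 25%N => match k with | 5%N => mkq (- 4%:Z) 3%N | _ => 0 end
    | 27%N => match k with | 7%N => mkq (- 4%:Z) 3%N | _ => 0 end
    | 29%N => match k with | 11%N => mkq (- 4%:Z) 3%N | _ => 0 end
    | _ => 0 end
  | 19%N => match j with
    | 0%N => match k with | 19%N => mkq (- 1%:Z) 1%N | _ => 0 end
    | 1%N => match k with | 19%N => mkq (- 1%:Z) 1%N | _ => 0 end
    | 2%N => match k with | 23%N => mkq (1%:Z) 1%N | _ => 0 end
    | 4%N => match k with | 27%N => mkq (- 1%:Z) 1%N | _ => 0 end
    | 5%N => match k with | 17%N => mkq (1%:Z) 2%N | _ => 0 end
    | 6%N => match k with | 21%N => mkq (1%:Z) 1%N | _ => 0 end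
    | 8%N => match k with | 29%N => mkq (- 1%:Z) 1%N | _ => 0 end
    | 15%N => match k with | 19%N => mkq (- 1%:Z) 1%N | _ => 0 end
    | 16%N => match k with | 20%N => mkq (- 1%:Z) 1%N | _ => 0 end
    | 18%N => match k with | 10%N => mkq (- 2%:Z) 3%N | _ => 0 end
    | 22%N => match k with | 11%N => mkq (2%:Z) 3%N | _ => 0 end
    | 24%N => match k with | 7%N => mkq (- 2%:Z) 3%N | _ => 0 end
    | 25%N => match k with | 14%N => mkq (- 4%:Z) 3%N | _ => 0 end
    | 26%N => match k with | 0%N => mkq (- 1%:Z) 3%N | 1%N => mkq (- 1%:Z) 3%N | 15%N => mkq (2%:Z) 3%N | _ => 0 end
    | 28%N => match k with | 9%N => mkq (1%:Z) 1%N | _ => 0 end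
    | 30%N => match k with | 13%N => mkq (1%:Z) 1%N | _ => 0 end
    | _ => 0 end
  | 20%N => match j with
    | 0%N => match k with | 20%N => mkq (- 1%:Z) 1%N | _ => 0 end
    | 1%N => match k with | 20%N => mkq (- 1%:Z) 1%N | _ => 0 end
    | 2%N => match k with | 24%N => mkq (1%:Z) 1%N | _ => 0 end
    | 4%N => match k with | 28%N => mkq (- 1%:Z) 1%N | _ => 0 end
    | 5%N => match k with | 18%N => mkq (1%:Z) 2%N | _ => 0 end
    | 6%N => match k with | 22%N => mkq (1%:Z) 1%N | _ => 0 end
    | 8%N => match k with | 30%N => mkq (- 1%:Z) 1%N | _ => 0 end
    | 14%N => match k with | 19%N => mkq (- 1%:Z) 1%N | _ => 0 end
    | 15%N => match k with | 20%N => mkq (1%:Z) 1%N | _ => 0 end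
    | 17%N => match k with | 10%N => mkq (2%:Z) 3%N | _ => 0 end
    | 21%N => match k with | 11%N => mkq (- 2%:Z) 3%N | _ => 0 end
    | 23%N => match k with | 7%N => mkq (2%:Z) 3%N | _ => 0 end
    | 25%N => match k with | 0%N => mkq (1%:Z) 3%N | 1%N => mkq (1%:Z) 3%N | 15%N => mkq (2%:Z) 3%N | _ => 0 end
    | 26%N => match k with | 16%N => mkq (4%:Z) 3%N | _ => 0 end
    | 27%N => match k with | 9%N => mkq (- 1%:Z) 1%N | _ => 0 end
    | 29%N => match k with | 13%N => mkq (- 1%:Z) 1%N | _ => 0 end
    | _ => 0 end
  | 21%N => match j with
    | 0%N => match k with | 21%N => mkq (1%:Z) 1%N | _ => 0 end
    | 3%N => match k with | 23%N => mkq (1%:Z) 1%N | _ => 0 end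
    | 4%N => match k with | 25%N => mkq (1%:Z) 1%N | _ => 0 end
    | 7%N => match k with | 17%N => mkq (1%:Z) 2%N | _ => 0 end
    | 9%N => match k with | 19%N => mkq (1%:Z) 1%N | _ => 0 end
    | 10%N => match k with | 29%N => mkq (- 1%:Z) 1%N | _ => 0 end
    | 15%N => match k with | 21%N => mkq (- 1%:Z) 1%N | _ => 0 end
    | 16%N => match k with | 22%N => mkq (- 1%:Z) 1%N | _ => 0 end
    | 18%N => match k with | 8%N => mkq (2%:Z) 3%N | _ => 0 end
    | 20%N => match k with | 11%N => mkq (- 2%:Z) 3%N | _ => 0 end
    | 24%N => match k with | 5%N => mkq (2%:Z) 3%N | _ => 0 end
    | 26%N => match k with | 6%N => mkq (1%:Z) 1%N | _ => 0 end
    | 27%N => match k with | 14%N => mkq (- 4%:Z) 3%N | _ => 0 end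
    | 28%N => match k with | 0%N => mkq (2%:Z) 3%N | 1%N => mkq (- 1%:Z) 3%N | 15%N => mkq (2%:Z) 3%N | _ => 0 end
    | 30%N => match k with | 12%N => mkq (1%:Z) 1%N | _ => 0 end
    | _ => 0 end
  | 22%N => match j with
    | 0%N => match k with | 22%N => mkq (1%:Z) 1%N | _ => 0 end
    | 3%N => match k with | 24%N => mkq (1%:Z) 1%N | _ => 0 end
    | 4%N => match k with | 26%N => mkq (1%:Z) 1%N | _ => 0 end
    | 7%N => match k with | 18%N => mkq (1%:Z) 2%N | _ => 0 end
    | 9%N => match k with | 20%N => mkq (1%:Z) 1%N | _ => 0 end
    | 10%N => match k with | 30%N => mkq (- 1%:Z) 1%N | _ => 0 end
    | 14%N => match k with | 21%N => mkq (- 1%:Z) 1%N | _ => 0 end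
    | 15%N => match k with | 22%N => mkq (1%:Z) 1%N | _ => 0 end
    | 17%N => match k with | 8%N => mkq (- 2%:Z) 3%N | _ => 0 end
    | 19%N => match k with | 11%N => mkq (2%:Z) 3%N | _ => 0 end
    | 23%N => match k with | 5%N => mkq (- 2%:Z) 3%N | _ => 0 end
    | 25%N => match k with | 6%N => mkq (- 1%:Z) 1%N | _ => 0 end
    | 27%N => match k with | 0%N => mkq (- 2%:Z) 3%N | 1%N => mkq (1%:Z) 3%N | 15%N => mkq (2%:Z) 3%N | _ => 0 end
    | 28%N => match k with | 16%N => mkq (4%:Z) 3%N | _ => 0 end
    | 29%N => match k with | 12%N => mkq (- 1%:Z) 1%N | _ => 0 end
    | _ => 0 end
  | 23%N => match j with
    | 1%N => match k with | 23%N => mkq (1%:Z) 1%N | _ => 0 end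
    | 8%N => match k with | 25%N => mkq (1%:Z) 1%N | _ => 0 end
    | 10%N => match k with | 27%N => mkq (1%:Z) 1%N | _ => 0 end
    | 11%N => match k with | 17%N => mkq (1%:Z) 2%N | _ => 0 end
    | 12%N => match k with | 21%N => mkq (1%:Z) 1%N | _ => 0 end
    | 13%N => match k with | 19%N => mkq (1%:Z) 1%N | _ => 0 end
    | 15%N => match k with | 23%N => mkq (- 1%:Z) 1%N | _ => 0 end
    | 16%N => match k with | 24%N => mkq (- 1%:Z) 1%N | _ => 0 end
    | 18%N => match k with | 4%N => mkq (- 2%:Z) 3%N | _ => 0 end
    | 20%N => match k with | 7%N => mkq (2%:Z) 3%N | _ => 0 end
    | 22%N => match k with | 5%N => mkq (- 2%:Z) 3%N | _ => 0 end
    | 26%N => match k with | 2%N => mkq (1%:Z) 1%N | _ => 0 end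
    | 28%N => match k with | 3%N => mkq (1%:Z) 1%N | _ => 0 end
    | 29%N => match k with | 14%N => mkq (- 4%:Z) 3%N | _ => 0 end
    | 30%N => match k with | 0%N => mkq (- 1%:Z) 3%N | 1%N => mkq (2%:Z) 3%N | 15%N => mkq (2%:Z) 3%N | _ => 0 end
    | _ => 0 end
  | 24%N => match j with
    | 1%N => match k with | 24%N => mkq (1%:Z) 1%N | _ => 0 end
    | 8%N => match k with | 26%N => mkq (1%:Z) 1%N | _ => 0 end
    | 10%N => match k with | 28%N => mkq (1%:Z) 1%N | _ => 0 end
    | 11%N => match k with | 18%N => mkq (1%:Z) 2%N | _ => 0 end
    | 12%N => match k with | 22%N => mkq (1%:Z) 1%N | _ => 0 end
    | 13%N => match k with | 20%N => mkq (1%:Z) 1%N | _ => 0 end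
    | 14%N => match k with | 23%N => mkq (- 1%:Z) 1%N | _ => 0 end
    | 15%N => match k with | 24%N => mkq (1%:Z) 1%N | _ => 0 end
    | 17%N => match k with | 4%N => mkq (2%:Z) 3%N | _ => 0 end
    | 19%N => match k with | 7%N => mkq (- 2%:Z) 3%N | _ => 0 end
    | 21%N => match k with | 5%N => mkq (2%:Z) 3%N | _ => 0 end
    | 25%N => match k with | 2%N => mkq (- 1%:Z) 1%N | _ => 0 end
    | 27%N => match k with | 3%N => mkq (- 1%:Z) 1%N | _ => 0 end
    | 29%N => match k with | 0%N => mkq (1%:Z) 3%N | 1%N => mkq (- 2%:Z) 3%N | 15%N => mkq (2%:Z) 3%N | _ => 0 end
    | 30%N => match k with | 16%N => mkq (4%:Z) 3%N | _ => 0 end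
    | _ => 0 end
  | 25%N => match j with
    | 0%N => match k with | 25%N => mkq (1%:Z) 1%N | _ => 0 end
    | 1%N => match k with | 25%N => mkq (1%:Z) 1%N | _ => 0 end
    | 7%N => match k with | 23%N => mkq (1%:Z) 2%N | _ => 0 end
    | 9%N => match k with | 27%N => mkq (- 1%:Z) 1%N | _ => 0 end
    | 10%N => match k with | 17%N => mkq (1%:Z) 1%N | _ => 0 end
    | 11%N => match k with | 21%N => mkq (- 1%:Z) 2%N | _ => 0 end
    | 13%N => match k with | 29%N => mkq (- 1%:Z) 1%N | _ => 0 end
    | 15%N => match k with | 25%N => mkq (- 1%:Z) 1%N | _ => 0 end
    | 16%N => match k with | 26%N => mkq (- 1%:Z) 1%N | _ => 0 end
    | 18%N => match k with | 5%N => mkq (- 4%:Z) 3%N | _ => 0 end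
    | 19%N => match k with | 14%N => mkq (- 4%:Z) 3%N | _ => 0 end
    | 20%N => match k with | 0%N => mkq (1%:Z) 3%N | 1%N => mkq (1%:Z) 3%N | 15%N => mkq (2%:Z) 3%N | _ => 0 end
    | 22%N => match k with | 6%N => mkq (- 1%:Z) 1%N | _ => 0 end
    | 24%N => match k with | 2%N => mkq (- 1%:Z) 1%N | _ => 0 end
    | 28%N => match k with | 4%N => mkq (1%:Z) 3%N | _ => 0 end
    | 30%N => match k with | 8%N => mkq (1%:Z) 3%N | _ => 0 end
    | _ => 0 end
  | 26%N => match j with
    | 0%N => match k with | 26%N => mkq (1%:Z) 1%N | _ => 0 end
    | 1%N => match k with | 26%N => mkq (1%:Z) 1%N | _ => 0 end
    | 7%N => match k with | 24%N => mkq (1%:Z) 2%N | _ => 0 end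
    | 9%N => match k with | 28%N => mkq (- 1%:Z) 1%N | _ => 0 end
    | 10%N => match k with | 18%N => mkq (1%:Z) 1%N | _ => 0 end
    | 11%N => match k with | 22%N => mkq (- 1%:Z) 2%N | _ => 0 end
    | 13%N => match k with | 30%N => mkq (- 1%:Z) 1%N | _ => 0 end
    | 14%N => match k with | 25%N => mkq (- 1%:Z) 1%N | _ => 0 end
    | 15%N => match k with | 26%N => mkq (1%:Z) 1%N | _ => 0 end
    | 17%N => match k with | 5%N => mkq (4%:Z) 3%N | _ => 0 end
    | 19%N => match k with | 0%N => mkq (- 1%:Z) 3%N | 1%N => mkq (- 1%:Z) 3%N | 15%N => mkq (2%:Z) 3%N | _ => 0 end
    | 20%N => match k with | 16%N => mkq (4%:Z) 3%N | _ => 0 end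
    | 21%N => match k with | 6%N => mkq (1%:Z) 1%N | _ => 0 end
    | 23%N => match k with | 2%N => mkq (1%:Z) 1%N | _ => 0 end
    | 27%N => match k with | 4%N => mkq (- 1%:Z) 3%N | _ => 0 end
    | 29%N => match k with | 8%N => mkq (- 1%:Z) 3%N | _ => 0 end
    | _ => 0 end
  | 27%N => match j with
    | 0%N => match k with | 27%N => mkq (- 1%:Z) 1%N | _ => 0 end
    | 5%N => match k with | 23%N => mkq (- 1%:Z) 2%N | _ => 0 end
    | 6%N => match k with | 25%N => mkq (- 1%:Z) 1%N | _ => 0 end
    | 8%N => match k with | 17%N => mkq (- 1%:Z) 1%N | _ => 0 end
    | 11%N => match k with | 19%N => mkq (1%:Z) 2%N | _ => 0 end
    | 12%N => match k with | 29%N => mkq (- 1%:Z) 1%N | _ => 0 end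
    | 15%N => match k with | 27%N => mkq (- 1%:Z) 1%N | _ => 0 end
    | 16%N => match k with | 28%N => mkq (- 1%:Z) 1%N | _ => 0 end
    | 18%N => match k with | 7%N => mkq (- 4%:Z) 3%N | _ => 0 end
    | 20%N => match k with | 9%N => mkq (- 1%:Z) 1%N | _ => 0 end
    | 21%N => match k with | 14%N => mkq (- 4%:Z) 3%N | _ => 0 end
    | 22%N => match k with | 0%N => mkq (- 2%:Z) 3%N | 1%N => mkq (1%:Z) 3%N | 15%N => mkq (2%:Z) 3%N | _ => 0 end
    | 24%N => match k with | 3%N => mkq (- 1%:Z) 1%N | _ => 0 end
    | 26%N => match k with | 4%N => mkq (- 1%:Z) 3%N | _ => 0 end
    | 30%N => match k with | 10%N => mkq (1%:Z) 3%N | _ => 0 end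
    | _ => 0 end
  | 28%N => match j with
    | 0%N => match k with | 28%N => mkq (- 1%:Z) 1%N | _ => 0 end
    | 5%N => match k with | 24%N => mkq (- 1%:Z) 2%N | _ => 0 end
    | 6%N => match k with | 26%N => mkq (- 1%:Z) 1%N | _ => 0 end
    | 8%N => match k with | 18%N => mkq (- 1%:Z) 1%N | _ => 0 end
    | 11%N => match k with | 20%N => mkq (1%:Z) 2%N | _ => 0 end
    | 12%N => match k with | 30%N => mkq (- 1%:Z) 1%N | _ => 0 end
    | 14%N => match k with | 27%N => mkq (- 1%:Z) 1%N | _ => 0 end
    | 15%N => match k with | 28%N => mkq (1%:Z) 1%N | _ => 0 end
    | 17%N => match k with | 7%N => mkq (4%:Z) 3%N | _ => 0 end
    | 19%N => match k with | 9%N => mkq (1%:Z) 1%N | _ => 0 end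
    | 21%N => match k with | 0%N => mkq (2%:Z) 3%N | 1%N => mkq (- 1%:Z) 3%N | 15%N => mkq (2%:Z) 3%N | _ => 0 end
    | 22%N => match k with | 16%N => mkq (4%:Z) 3%N | _ => 0 end
    | 23%N => match k with | 3%N => mkq (1%:Z) 1%N | _ => 0 end
    | 25%N => match k with | 4%N => mkq (1%:Z) 3%N | _ => 0 end
    | 29%N => match k with | 10%N => mkq (- 1%:Z) 3%N | _ => 0 end
    | _ => 0 end
  | 29%N => match j with
    | 1%N => match k with | 29%N => mkq (- 1%:Z) 1%N | _ => 0 end
    | 2%N => match k with | 25%N => mkq (- 1%:Z) 1%N | _ => 0 end
    | 3%N => match k with | 27%N => mkq (- 1%:Z) 1%N | _ => 0 end
    | 4%N => match k with | 17%N => mkq (1%:Z) 1%N | _ => 0 end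
    | 5%N => match k with | 21%N => mkq (1%:Z) 2%N | _ => 0 end
    | 7%N => match k with | 19%N => mkq (- 1%:Z) 2%N | _ => 0 end
    | 15%N => match k with | 29%N => mkq (- 1%:Z) 1%N | _ => 0 end
    | 16%N => match k with | 30%N => mkq (- 1%:Z) 1%N | _ => 0 end
    | 18%N => match k with | 11%N => mkq (- 4%:Z) 3%N | _ => 0 end
    | 20%N => match k with | 13%N => mkq (- 1%:Z) 1%N | _ => 0 end
    | 22%N => match k with | 12%N => mkq (- 1%:Z) 1%N | _ => 0 end
    | 23%N => match k with | 14%N => mkq (- 4%:Z) 3%N | _ => 0 end
    | 24%N => match k with | 0%N => mkq (1%:Z) 3%N | 1%N => mkq (- 2%:Z) 3%N | 15%N => mkq (2%:Z) 3%N | _ => 0 end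
    | 26%N => match k with | 8%N => mkq (- 1%:Z) 3%N | _ => 0 end
    | 28%N => match k with | 10%N => mkq (- 1%:Z) 3%N | _ => 0 end
    | _ => 0 end
  | 30%N => match j with
    | 1%N => match k with | 30%N => mkq (- 1%:Z) 1%N | _ => 0 end
    | 2%N => match k with | 26%N => mkq (- 1%:Z) 1%N | _ => 0 end
    | 3%N => match k with | 28%N => mkq (- 1%:Z) 1%N | _ => 0 end
    | 4%N => match k with | 18%N => mkq (1%:Z) 1%N | _ => 0 end
    | 5%N => match k with | 22%N => mkq (1%:Z) 2%N | _ => 0 end
    | 7%N => match k with | 20%N => mkq (- 1%:Z) 2%N | _ => 0 end
    | 14%N => match k with | 29%N => mkq (- 1%:Z) 1%N | _ => 0 end
    | 15%N => match k with | 30%N => mkq (1%:Z) 1%N | _ => 0 end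
    | 17%N => match k with | 11%N => mkq (4%:Z) 3%N | _ => 0 end
    | 19%N => match k with | 13%N => mkq (1%:Z) 1%N | _ => 0 end
    | 21%N => match k with | 12%N => mkq (1%:Z) 1%N | _ => 0 end
    | 23%N => match k with | 0%N => mkq (- 1%:Z) 3%N | 1%N => mkq (2%:Z) 3%N | 15%N => mkq (2%:Z) 3%N | _ => 0 end
    | 24%N => match k with | 16%N => mkq (4%:Z) 3%N | _ => 0 end
    | 25%N => match k with | 8%N => mkq (1%:Z) 3%N | _ => 0 end
    | 27%N => match k with | 10%N => mkq (1%:Z) 3%N | _ => 0 end
    | _ => 0 end
  | _ => 0 end.

Definition chainL0 : seq ((nat*nat)*(nat*nat*nat)) :=
  [:: ((25,5),(4,25,2));
     ((25,7),(4,25,3));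
     ((26,5),(4,26,2));
     ((26,7),(4,26,3));
     ((27,5),(4,27,2));
     ((27,7),(4,27,3));
     ((28,5),(4,28,2));
     ((28,7),(4,28,3));
     ((23,4),(5,23,2));
     ((24,4),(5,24,2));
     ((25,27),(5,25,23));
     ((25,28),(5,25,24));
     ((26,27),(5,26,23));
     ((26,28),(5,26,24));
     ((27,27),(5,27,23));
     ((27,28),(5,27,24));
     ((28,27),(5,28,23));
     ((25,25),(7,25,23));
     ((25,26),(7,25,24));
     ((26,25),(7,26,23));
     ((27,25),(7,27,23));
     ((27,26),(7,27,24));
     ((28,25),(7,28,23));
     ((28,26),(7,28,24));
     ((26,26),(23,26,2));
     ((24,24),(7,26,24));
     ((28,28),(5,28,24))]%N.

Definition chainL1 : seq ((nat*nat)*(nat*nat*nat)) :=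
  [:: ((25,9),(2,25,3));
     ((26,9),(2,26,3));
     ((27,9),(2,27,3));
     ((28,9),(2,28,3));
     ((25,6),(3,25,2));
     ((26,6),(3,26,2));
     ((27,6),(3,27,2));
     ((28,6),(3,28,2));
     ((23,5),(4,23,2));
     ((23,7),(4,23,3));
     ((24,5),(4,24,2));
     ((24,7),(4,24,3));
     ((25,1),(4,25,4));
     ((25,0),(2,25,2));
     ((25,17),(4,25,23));
     ((25,18),(4,25,24));
     ((26,1),(4,26,4));
     ((26,0),(2,26,2));
     ((26,17),(4,26,23));
     ((26,18),(4,26,24));
     ((27,1),(4,27,4));
     ((27,0),(2,27,2));
     ((27,17),(4,27,23));
     ((27,18),(4,27,24));
     ((28,1),(4,28,4));
     ((28,0),(2,28,2));
     ((28,17),(4,28,23));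
     ((28,18),(4,28,24));
     ((23,27),(5,23,23));
     ((23,28),(5,23,24));
     ((24,27),(5,24,23));
     ((24,28),(5,24,24));
     ((23,25),(5,27,25));
     ((23,26),(5,27,26));
     ((24,25),(5,28,25));
     ((24,26),(5,28,26));
     ((25,15),(23,25,23));
     ((25,16),(23,25,24));
     ((26,15),(23,26,23));
     ((26,16),(23,26,24));
     ((27,15),(23,27,23));
     ((27,16),(23,27,24));
     ((28,15),(23,28,23));
     ((28,16),(23,28,24));
     ((25,14),(24,25,23));
     ((26,14),(24,26,23));
     ((27,14),(24,27,23));
     ((28,14),(24,28,23))]%N.

Definition chainL2 : seq ((nat*nat)*(nat*nat*nat)) :=
  [:: ((23,9),(2,23,3));
     ((24,9),(2,24,3));
     ((25,10),(2,25,4));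
     ((25,19),(2,25,23));
     ((25,20),(2,25,24));
     ((26,10),(2,26,4));
     ((26,19),(2,26,23));
     ((26,20),(2,26,24));
     ((27,10),(2,27,4));
     ((27,19),(2,27,23));
     ((27,20),(2,27,24));
     ((28,10),(2,28,4));
     ((28,19),(2,28,23));
     ((28,20),(2,28,24));
     ((23,6),(3,23,2));
     ((24,6),(3,24,2));
     ((25,8),(3,25,4));
     ((25,21),(3,25,23));
     ((25,22),(3,25,24));
     ((26,8),(3,26,4));
     ((26,21),(3,26,23));
     ((26,22),(3,26,24));
     ((27,8),(3,27,4));
     ((27,21),(3,27,23));
     ((27,22),(3,27,24));
     ((28,8),(3,28,4));
     ((28,21),(3,28,23));
     ((28,22),(3,28,24));
     ((23,1),(4,23,4));
     ((23,0),(2,23,2));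
     ((23,17),(4,23,23));
     ((23,18),(4,23,24));
     ((24,1),(4,24,4));
     ((24,0),(2,24,2));
     ((24,17),(4,24,23));
     ((24,18),(4,24,24));
     ((23,14),(5,27,14));
     ((23,15),(5,27,15));
     ((23,16),(5,27,16));
     ((24,14),(5,28,14));
     ((24,15),(5,28,15));
     ((24,16),(5,28,16))]%N.

Definition chainL3 : seq ((nat*nat)*(nat*nat*nat)) :=
  [:: ((23,10),(2,23,4));
     ((23,19),(2,23,23));
     ((23,20),(2,23,24));
     ((24,10),(2,24,4));
     ((24,19),(2,24,23));
     ((24,20),(2,24,24));
     ((25,11),(2,25,5));
     ((25,29),(2,25,25));
     ((25,30),(2,25,26));
     ((26,11),(2,26,5));
     ((26,29),(2,26,25));
     ((26,30),(2,26,26));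
     ((27,11),(2,27,5));
     ((27,29),(2,27,25));
     ((27,30),(2,27,26));
     ((28,11),(2,28,5));
     ((28,29),(2,28,25));
     ((28,30),(2,28,26));
     ((23,8),(3,23,4));
     ((23,21),(3,23,23));
     ((23,22),(3,23,24));
     ((24,8),(3,24,4));
     ((24,21),(3,24,23));
     ((24,22),(3,24,24))]%N.

Definition chainL4 : seq ((nat*nat)*(nat*nat*nat)) :=
  [:: ((23,11),(2,23,5));
     ((23,29),(2,23,25));
     ((23,30),(2,23,26));
     ((24,11),(2,24,5));
     ((24,29),(2,24,25));
     ((24,30),(2,24,26));
     ((25,13),(2,25,1));
     ((25,12),(2,25,6));
     ((26,13),(2,26,1));
     ((26,12),(2,26,6));
     ((27,13),(2,27,1));
     ((27,12),(2,27,6));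
     ((28,13),(2,28,1));
     ((28,12),(2,28,6))]%N.

Definition chainL5 : seq ((nat*nat)*(nat*nat*nat)) :=
  [:: ((23,13),(2,23,1));
     ((23,12),(2,23,6));
     ((24,13),(2,24,1));
     ((24,12),(2,24,6))]%N.

Definition allI (p : nat -> bool) : bool := all p (iota 0 31).
Definition gL3 (x : nat * nat * nat) : rat := gL x.1.1 x.1.2 x.2.

Lemma tab_uniq : uniq (map fst g3_table).
Proof. vm_compute. by []. Qed.
Lemma tab_vals : all (fun t => gL3 t.1 == mkq t.2.1 t.2.2) g3_table.
Proof. vm_compute. by []. Qed.
Lemma tab_keys :
  allI (fun i => allI (fun j => allI (fun k => if gL i j k != 0 then (i, j, k) \in map fst g3_table else true))).
Proof. vm_compute. by []. Qed.

Lemma foldr_tab (s : seq ((nat * nat * nat) * (int * nat))) (x : nat * nat * nat) :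
  uniq (map fst s) -> all (fun t => gL3 t.1 == mkq t.2.1 t.2.2) s ->
  foldr (fun t acc => if t.1 == x then mkq t.2.1 t.2.2 + acc else acc) 0 s
  = if x \in map fst s then gL3 x else 0.
Proof.
elim: s => [//|t s IH] /= /andP[nt us] /andP[/eqP vt vs].
rewrite IH // in_cons; have [<-|ne] := eqVneq t.1 x.
  by rewrite ?eqxx /= (negbTE nt) addr0 vt.
by [] .
Qed.

Lemma gQ_gL (i j k : idx) : gQ i j k = gL i j k.
Proof.
rewrite /gQ foldr_tab ?tab_uniq ?tab_vals //.
have := tab_keys; rewrite /allI => /allP/(_ i); rewrite mem_iota ltn_ord => /(_ isT).
move=> /allP/(_ j); rewrite mem_iota ltn_ord => /(_ isT).
move=> /allP/(_ k); rewrite mem_iota ltn_ord => /(_ isT).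
case: (gL i j k =P 0) => [e|/eqP nz]; first by move=> _; case: ifP => // _; rewrite /gL3 /= e.
by move=> /= ->.
Qed.

Lemma g3cE (C : numFieldType) (i j k : idx) : g3c C i j k = ratr (gL i j k).
Proof.
rewrite -gQ_gL /g3c /gQ; elim: g3_table => [|t s IH]; first by rewrite big_nil rmorph0.
rewrite big_cons /=; case: ifP => _; rewrite ?rmorphD IH //.
by congr (_ + _); rewrite /mkq fmorph_div rmorph_int rmorph_nat.
Qed.

Definition parN (n : nat) : bool := (17 <= n)%N.
Definition degN (n : nat) : int := let w := nth (0, 0, 0) g3_weights n in w.1.2 + w.2.

Definition cQ (i j k a b : nat) : rat :=
  (if a == j then (-1) ^+ ((parN j (+) parN b) && parN i) * gL i b k else 0)
  - (if a == i then (-1) ^+ (parN j && parN b) * gL j b k else 0)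
  - (if b == k then gL i j a else 0).

Lemma sum_delta (C : zmodType) (F : idx -> C) (j : idx) :
  \sum_(a : idx) (if (a : nat) == j then F a else 0) = F j.
Proof.
rewrite (bigD1 j) //= eqxx big1 ?addr0 // => a naj.
case: eqP => // /ord_inj e; by rewrite e eqxx in naj.
Qed.

Lemma sum_if (C : zmodType) (c : bool) (G : idx -> C) :
  \sum_(b : idx) (if c then G b else 0) = if c then \sum_(b : idx) G b else 0.
Proof. by case: c; rewrite // big1. Qed.

Lemma dcocE (C : numFieldType) (phi : 'M[C]_G3dim) (i j k : idx) :
  dcoc phi i j k = \sum_(a : idx) \sum_(b : idx) ratr (cQ i j k a b) * phi a b.
Proof.
have E : forall a b : idx, ratr (cQ i j k a b) * phi a b =
   (if (a:nat) == j then (-1) ^+ ((par j (+) par b) && par i) * phi j b * g3c C i b k else 0)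
 - (if (a:nat) == i then (-1) ^+ (par j && par b) * phi i b * g3c C j b k else 0)
 - (if (b:nat) == k then g3c C i j a * phi a k else 0).
  move=> a b; rewrite /cQ !rmorphB !mulrBl !g3cE.
  congr (_ - _ - _); case: eqP => [/ord_inj->|_]; rewrite ?rmorph0 ?mul0r //;
    by rewrite ?rmorphM ?rmorph_sign // mulrAC.
transitivity (\sum_(a : idx) \sum_(b : idx) (if (a:nat) == j then (-1) ^+ ((par j (+) par b) && par i) * phi j b * g3c C i b k else 0)
 - \sum_(a : idx) \sum_(b : idx) (if (a:nat) == i then (-1) ^+ (par j && par b) * phi i b * g3c C j b k else 0)
 - \sum_(a : idx) \sum_(b : idx) (if (b:nat) == k then g3c C i j a * phi a k else 0)); last first.
  rewrite -!sumrB; apply: eq_bigr => a _; rewrite -!sumrB; apply: eq_bigr => b _.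
  by rewrite E.
rewrite /dcoc; congr (_ - _ - _).
- under [RHS]eq_bigr => a _ do rewrite sum_if.
  by rewrite sum_delta.
- under [RHS]eq_bigr => a _ do rewrite sum_if.
  by rewrite sum_delta.
- apply: eq_bigr => a _.
  by rewrite (sum_delta _ (fun _ => g3c C i j a * phi a k)).
Qed.

Lemma allI_idx (f : nat -> bool) : allI f -> forall a : idx, f a.
Proof. by move/allP=> H a; apply: H; rewrite mem_iota ltn_ord. Qed.

Definition chk (P : nat -> nat -> bool) (t : nat * nat) (e : nat * nat * nat) : bool :=
  [&& [&& (e.1.1 < 31)%N, (e.1.2 < 31)%N, (e.2 < 31)%N, (t.1 < 31)%N & (t.2 < 31)%N],
      degN e.1.1 < 0, degN e.1.2 < 0, P t.1 t.2, cQ e.1.1 e.1.2 e.2 t.1 t.2 != 0 &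
      allI (fun a => allI (fun b => if P a b then
         ((a == t.1) && (b == t.2)) || (cQ e.1.1 e.1.2 e.2 a b == 0) else true))].

Fixpoint checkChain (P : nat -> nat -> bool) (ch : seq ((nat * nat) * (nat * nat * nat))) : bool :=
  match ch with
  | [::] => allI (fun a => allI (fun b => ~~ P a b))
  | te :: ch' => chk P te.1 te.2 &&
      checkChain (fun a b => P a b && ~~ ((a == te.1.1) && (b == te.1.2))) ch'
  end.

Lemma sum2_single (C : zmodType) (F : idx -> idx -> C) (ta tb : nat) :
  (ta < 31)%N -> (tb < 31)%N ->
  (forall a b : idx, ~~ (((a : nat) == ta) && ((b : nat) == tb)) -> F a b = 0) ->
  \sum_(a : idx) \sum_(b : idx) F a b = F (inord ta) (inord tb).
Proof.
move=> ha hb H; rewrite (bigD1 (inord ta)) //= (bigD1 (inord tb)) //=.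
rewrite big1 ?addr0; last first.
  move=> b nb; apply: H; rewrite inordK // eqxx /=.
  by apply: contra nb => /eqP e; apply/eqP/ord_inj; rewrite inordK.
rewrite big1 ?addr0 // => a na; apply: big1 => b _; apply: H.
by apply: contra na => /andP[/eqP e _]; apply/eqP/ord_inj; rewrite inordK.
Qed.

Lemma chk_step (C : numFieldType) (phi : 'M[C]_G3dim) (P : nat -> nat -> bool) (t : nat * nat) (e : nat * nat * nat) :
  cocycle1 phi -> (forall a b : idx, ~~ P a b -> phi a b = 0) -> chk P t e ->
  forall a b : idx, ~~ (P a b && ~~ (((a : nat) == t.1) && ((b : nat) == t.2))) -> phi a b = 0.
Proof.
move=> cc van /andP[/and5P[hi hj hk ha hb] /and5P[di dj Pt nz /allI_idx all]].
have d1 : deg (inord e.1.1 : idx) < 0 by rewrite /deg /wt inordK.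
have d2 : deg (inord e.1.2 : idx) < 0 by rewrite /deg /wt inordK.
have := cc _ _ (inord e.2) d1 d2.
rewrite dcocE !inordK // (@sum2_single _ _ t.1 t.2) //; last first.
  move=> a b nab; have /allI_idx/(_ b) := all a.
  case: ifP => [_ | /negbT /van -> ]; last by rewrite mulr0.
  by rewrite (negbTE nab) /= => /eqP ->; rewrite rmorph0 mul0r.
move/eqP; rewrite mulf_eq0 fmorph_eq0 !inordK // (negbTE nz) /= => /eqP z.
move=> a b; rewrite negb_and negbK; case/orP; first exact: van.
case/andP => /eqP ea /eqP eb.
have -> : a = inord t.1 by apply: ord_inj; rewrite inordK.
have -> : b = inord t.2 by apply: ord_inj; rewrite inordK.
exact: z.
Qed.

Lemma chainP (C : numFieldType) (phi : 'M[C]_G3dim) (P : nat -> nat -> bool) ch :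
  cocycle1 phi -> (forall a b : idx, ~~ P a b -> phi a b = 0) -> checkChain P ch -> phi = 0.
Proof.
elim: ch P => [|te ch IH] P cc van /=.
  move=> H; apply/matrixP => a b; rewrite mxE; apply: van.
  by move: (allI_idx _ H a) => /= /allI_idx /(_ b).
case/andP => h1 h2; apply: (IH _ cc _ h2) => a b; exact: chk_step cc van h1 a b.
Qed.

Definition allowedP (d : int) (a b : nat) : bool :=
  [&& parN a, degN a < 0 & degN b == degN a + d].

Lemma van_cochain (C : numFieldType) (d : int) (phi : 'M[C]_G3dim) :
  cochain1 d phi -> forall a b : idx, ~~ allowedP d a b -> phi a b = 0.
Proof.
move=> H a b nA; apply/eqP; apply: contraNT nA => /H [h1 h2 h3].
by apply/and3P; split => //; apply/eqP.
Qed.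

Definition Dq (x a b : nat) : rat := if degN a < 0 then gL x a b else 0.

Lemma inord_neq (m n : nat) : (m < 31)%N -> (n < 31)%N -> m != n -> (inord m : idx) != inord n.
Proof.
move=> hm hn; apply: contra => /eqP /(congr1 (@nat_of_ord _)).
by rewrite !inordK // => ->.
Qed.

Lemma ord_is (x : idx) (m : nat) : (x : nat) = m -> (m < 31)%N -> x = inord m.
Proof. by move=> e hm; apply: ord_inj; rewrite inordK. Qed.

Lemma sp2_sum (C : numFieldType) (X : 'rV[C]_G3dim) (F : idx -> C) : in_sp2 X ->
  \sum_(x : idx) X 0 x * F x =
  X 0 (inord 14) * F (inord 14) + X 0 (inord 15) * F (inord 15) + X 0 (inord 16) * F (inord 16).
Proof.
move=> hX; rewrite (bigD1 (inord 14)) //= (bigD1 (inord 15)) /=; last by rewrite inord_neq.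
rewrite (bigD1 (inord 16)) /=; last by rewrite !inord_neq.
rewrite big1 ?addr0 ?addrA // => x /andP[/andP[n14 n15] n16]; rewrite hX ?mul0r //.
apply/negP => /andP[h1 h2].
have : (x : nat) = 14%N \/ (x:nat) = 15%N \/ (x:nat) = 16%N.
  move: h1 h2; move: (nat_of_ord x) => n; clear; lia.
case=> [e|[e|e]].
- by move/eqP: n14; apply; apply: ord_is.
- by move/eqP: n15; apply; apply: ord_is.
- by move/eqP: n16; apply; apply: ord_is.
Qed.

Lemma ad_mE (C : numFieldType) (X : 'rV[C]_G3dim) : in_sp2 X -> forall a b : idx,
  ad_m X a b = X 0 (inord 14) * ratr (Dq 14 a b) + X 0 (inord 15) * ratr (Dq 15 a b)
             + X 0 (inord 16) * ratr (Dq 16 a b).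
Proof.
move=> hX a b; rewrite mxE /Dq; case: ifP => _; last by rewrite !rmorph0 !mulr0 !addr0.
by rewrite (sp2_sum _ _ (fun x => g3c C x a b) hX) !g3cE !inordK.
Qed.

Definition allpairs31 : seq (nat * nat) := [seq (a, b) | a <- iota 0 31, b <- iota 0 31].

Lemma big_foldr (r : seq (nat * nat)) (G : nat * nat -> rat) :
  \sum_(x <- r) G x = foldr (fun x acc => G x + acc) 0 r.
Proof. by elim: r => [|x r IH]; rewrite ?big_nil ?big_cons ?IH. Qed.

Definition filt (Q : nat -> nat -> bool) : seq (nat * nat) := [seq p <- allpairs31 | Q p.1 p.2].

Lemma sum2_foldr (F : nat -> nat -> rat) (Q : nat -> nat -> bool) :
  (forall a b, ~~ Q a b -> F a b = 0) ->
  \sum_(a : idx) \sum_(b : idx) F a b = foldr (fun p acc => F p.1 p.2 + acc) 0 (filt Q).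
Proof.
move=> H.
have E1 : forall G : nat -> rat, \sum_(a : idx) G a = \sum_(a <- iota 0 31) G a.
  move=> G; exact: esym (big_mkord xpredT G).
rewrite (E1 (fun a => \sum_(b : idx) F a b)); under eq_bigr => a _ do rewrite (E1 (F a)).
have -> : \sum_(a <- iota 0 31) \sum_(b <- iota 0 31) F a b
   = \sum_(p <- allpairs31) F p.1 p.2 by rewrite big_allpairs.
rewrite /filt -big_foldr big_filter; apply: esym; rewrite big_mkcond; apply: eq_bigr => p _.
by case: ifP => // /negbT /H ->.
Qed.

Definition DqNZ (x a b : nat) : bool := Dq x a b != 0.
Definition FF (i j k x a b : nat) : rat := cQ i j k a b * Dq x a b.

Definition ck_k (x : nat) (L : seq (nat * nat)) (i j k : nat) : bool :=
  foldr (fun p acc => FF i j k x p.1 p.2 + acc) 0 L == 0.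
Definition ck_ij (x : nat) (L : seq (nat * nat)) (i j : nat) : bool :=
  if (degN i < 0) && (degN j < 0) then allI (ck_k x L i j) else true.
Definition ck_x (x : nat) : bool := let L := filt (DqNZ x) in allI (fun i => allI (ck_ij x L i)).
Definition check_ad : bool := all ck_x [:: 14; 15; 16]%N.

Lemma ck_ijE x L i j : degN i < 0 -> degN j < 0 -> ck_ij x L i j = allI (ck_k x L i j).
Proof. by move=> hi hj; rewrite /ck_ij hi hj. Qed.

Lemma check_ad_ok : check_ad.
Proof. vm_compute. by []. Qed.

Lemma ad_cocycle (C : numFieldType) (X : 'rV[C]_G3dim) : in_sp2 X -> cocycle1 (ad_m X).
Proof.
move=> hX i j k di dj.
have key : forall x : nat, x \in [:: 14; 15; 16]%N -> forall X0 : C,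
    \sum_(a : idx) \sum_(b : idx) ratr (cQ i j k a b) * (X0 * ratr (Dq x a b)) = 0.
  move=> x xin X0.
  transitivity (X0 * ratr (\sum_(a : idx) \sum_(b : idx) FF i j k x a b)).
    rewrite rmorph_sum mulr_sumr; apply: eq_bigr => a _.
    rewrite rmorph_sum mulr_sumr; apply: eq_bigr => b _.
    by rewrite /FF rmorphM mulrCA.
  have Hq : forall a b, ~~ DqNZ x a b -> FF i j k x a b = 0.
    by move=> a b; rewrite /DqNZ negbK => /eqP e; rewrite /FF e mulr0.
  rewrite (sum2_foldr _ _ Hq).
  have di' : degN i < 0 := di.
  have dj' : degN j < 0 := dj.
  have H : ck_x x := allP check_ad_ok x xin.
  have H1 : allI (fun i => allI (ck_ij x (filt (DqNZ x)) i)) := H.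
  have H2 : allI (ck_ij x (filt (DqNZ x)) i) := allI_idx _ H1 i.
  have H3 : ck_ij x (filt (DqNZ x)) i j := allI_idx _ H2 j.
  have H4 : allI (ck_k x (filt (DqNZ x)) i j) := etrans (esym (ck_ijE x _ i j di' dj')) H3.
  have E0 : ck_k x (filt (DqNZ x)) i j k := allI_idx _ H4 k.
  by rewrite (eqP E0) rmorph0 mulr0.
rewrite dcocE.
transitivity (\sum_(a : idx) \sum_(b : idx) ratr (cQ i j k a b) * (X 0 (inord 14) * ratr (Dq 14 a b))
  + \sum_(a : idx) \sum_(b : idx) ratr (cQ i j k a b) * (X 0 (inord 15) * ratr (Dq 15 a b))
  + \sum_(a : idx) \sum_(b : idx) ratr (cQ i j k a b) * (X 0 (inord 16) * ratr (Dq 16 a b))).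
  rewrite -!big_split; apply: eq_bigr => a _; rewrite -!big_split; apply: eq_bigr => b _.
  by rewrite (ad_mE _ _ hX) !mulrDr.
by rewrite !key ?addr0.
Qed.

Definition check_adc : bool :=
  all (fun x => allI (fun a => allI (fun b => if Dq x a b != 0 then allowedP 0 a b else true)))
    [:: 14; 15; 16]%N.

Lemma check_adc_ok : check_adc.
Proof. vm_compute. by []. Qed.

Lemma ad_cochain (C : numFieldType) (X : 'rV[C]_G3dim) : in_sp2 X -> cochain1 0 (ad_m X).
Proof.
move=> hX a b nz.
have : (Dq 14 a b != 0) || (Dq 15 a b != 0) || (Dq 16 a b != 0).
  apply: contraNT nz; rewrite !negb_or !negbK => /andP[/andP[/eqP e1 /eqP e2] /eqP e3].
  by rewrite (ad_mE _ _ hX) e1 e2 e3 !rmorph0 !mulr0 !addr0.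
have H : forall x, x \in [:: 14; 15; 16]%N -> Dq x a b != 0 -> allowedP 0 a b.
  move=> x xin; move/allP: check_adc_ok => /(_ x xin) /allI_idx /(_ a) /allI_idx /(_ b).
  by case: ifP.
move=> h; have : allowedP 0 a b.
  by case/orP: h => [/orP[h|h]|h]; [apply: (H 14%N) | apply: (H 15%N) | apply: (H 16%N)].
by case/and3P => h1 h2 /eqP h3; split.
Qed.

Arguments chainP {C phi P} ch.
Arguments van_cochain {C d phi}.
Arguments ad_mE {C X}.
Arguments ad_cocycle {C X}.
Arguments ad_cochain {C X}.

Lemma piv_vals : [&& [&& Dq 14 24 23 == 1, Dq 15 24 23 == 0 & Dq 16 24 23 == 0],
                    [&& Dq 14 23 23 == 0, Dq 15 23 23 == 1 & Dq 16 23 23 == 0] &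
                    [&& Dq 14 23 24 == 0, Dq 15 23 24 == 0 & Dq 16 23 24 == 1]].
Proof. vm_compute. by []. Qed.

Lemma ad_piv (C : numFieldType) (X : 'rV[C]_G3dim) : in_sp2 X ->
  [/\ ad_m X (inord 24) (inord 23) = X 0 (inord 14),
      ad_m X (inord 23) (inord 23) = X 0 (inord 15) &
      ad_m X (inord 23) (inord 24) = X 0 (inord 16)].
Proof.
move=> hX.
case/and3P: piv_vals => /and3P[/eqP a1 /eqP a2 /eqP a3] /and3P[/eqP b1 /eqP b2 /eqP b3]
  /and3P[/eqP c1 /eqP c2 /eqP c3].
rewrite !(ad_mE hX) !inordK //.
rewrite a1 a2 a3 b1 b2 b3 c1 c2 c3 rmorph1 !rmorph0 !mulr1 !mulr0 ?add0r ?addr0.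
by split.
Qed.
Arguments ad_piv {C X}.

Definition pivot (a b : nat) : bool :=
  [|| (a == 24%N) && (b == 23%N), (a == 23%N) && (b == 23%N) | (a == 23%N) && (b == 24%N)].

Definition cb (a b : nat) : bool := if parN a && (degN a < 0) then degN b < degN a + 6 else true.
Lemma check_big_ok : allI (fun a => allI (cb a)).
Proof. vm_compute. by []. Qed.

Lemma c0 : checkChain (fun a b => allowedP 0 a b && ~~ pivot a b) chainL0.
Proof. vm_compute. by []. Qed.
Lemma c1 : checkChain (allowedP 1) chainL1.
Proof. vm_compute. by []. Qed.
Lemma c2 : checkChain (allowedP 2) chainL2.
Proof. vm_compute. by []. Qed.
Lemma c3 : checkChain (allowedP 3) chainL3.
Proof. vm_compute. by []. Qed.
Lemma c4 : checkChain (allowedP 4) chainL4.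
Proof. vm_compute. by []. Qed.
Lemma c5 : checkChain (allowedP 5) chainL5.
Proof. vm_compute. by []. Qed.

Theorem lemma3p14 (C : numClosedFieldType) :
  (* H^{0,1}(m_1bar, g) = sp(2), via X |-> [ad X |_m] *)
  [/\ (forall X : 'rV[C]_G3dim, in_sp2 X -> Z1 0 (ad_m X)),
      (forall X : 'rV[C]_G3dim, in_sp2 X -> cohomologous 0 (ad_m X) 0 -> X = 0),
      (forall phi : 'M[C]_G3dim, Z1 0 phi ->
         exists2 X : 'rV[C]_G3dim, in_sp2 X & cohomologous 0 phi (ad_m X))
    & (* H^{d,1}(m_1bar, g) = 0 for d > 0 *)
      (forall (d : int) (phi : 'M[C]_G3dim), 0 < d -> Z1 d phi -> cohomologous d phi 0)].
Proof.
split.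
- by move=> X hX; split; [exact: ad_cochain | exact: ad_cocycle].
- move=> X hX; rewrite /cohomologous /B1 subr0 => e.
  case: (ad_piv hX) => p1 p2 p3.
  have z : forall a b : idx, ad_m X a b = 0 by move=> a b; rewrite e mxE.
  apply/matrixP => i x; rewrite mxE (ord1 i).
  case h : (14 <= x <= 16)%N; last by rewrite hX ?h.
  have : (x : nat) = 14%N \/ (x:nat) = 15%N \/ (x:nat) = 16%N.
    by move/andP: h => [h1 h2]; move: h1 h2; move: (nat_of_ord x) => n; clear; lia.
  case=> [e'|[e'|e']]; rewrite (ord_is _ _ e' isT).
  + by rewrite -p1 z.
  + by rewrite -p2 z.
  + by rewrite -p3 z.
- move=> phi [co cc].
  pose X : 'rV[C]_G3dim := \row_(x < G3dim) (if (x:nat) == 14%N then phi (inord 24) (inord 23)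
     else if (x:nat) == 15%N then phi (inord 23) (inord 23)
     else if (x:nat) == 16%N then phi (inord 23) (inord 24) else 0).
  have hX : in_sp2 X.
    move=> j nj; rewrite mxE.
    have n14 : (j:nat) != 14%N by apply: contra nj => /eqP ->.
    have n15 : (j:nat) != 15%N by apply: contra nj => /eqP ->.
    have n16 : (j:nat) != 16%N by apply: contra nj => /eqP ->.
    by rewrite (negbTE n14) (negbTE n15) (negbTE n16).
  exists X => //.
  rewrite /cohomologous /B1.
  case: (ad_piv hX) => p1 p2 p3.
  have X14 : X 0 (inord 14) = phi (inord 24) (inord 23) by rewrite mxE inordK.
  have X15 : X 0 (inord 15) = phi (inord 23) (inord 23) by rewrite mxE inordK.
  have X16 : X 0 (inord 16) = phi (inord 23) (inord 24) by rewrite mxE inordK.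
  have psiE : forall a b : idx, (phi - ad_m X) a b = phi a b - ad_m X a b.
    by move=> a b; rewrite [(phi - _) a b]mxE [(- ad_m X) a b]mxE.
  apply: (@chainP _ _ (fun a b => allowedP 0 a b && ~~ pivot a b) chainL0); last exact: c0.
  + move=> i j k di dj.
    have -> : dcoc (phi - ad_m X) i j k = dcoc phi i j k - dcoc (ad_m X) i j k.
      rewrite !dcocE -sumrB; apply: eq_bigr => a _; rewrite -sumrB; apply: eq_bigr => b _.
      by rewrite psiE mulrBr.
    by rewrite cc // (ad_cocycle hX) // subr0.
  + move=> a b; rewrite negb_and negbK => /orP[nA|pv].
      by rewrite psiE (van_cochain co _ _ nA) (van_cochain (ad_cochain hX) _ _ nA) subrr.
    case/or3P: pv => /andP[/eqP ea /eqP eb]; rewrite (ord_is _ _ ea isT) (ord_is _ _ eb isT) psiE.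
    * by rewrite p1 X14 subrr.
    * by rewrite p2 X15 subrr.
    * by rewrite p3 X16 subrr.
- move=> d phi d0 [co cc]; rewrite /cohomologous /B1 subr0.
  case: d d0 co => n d0 co; last by move: d0; clear; lia.
  have n0 : (0 < n)%N by move: d0; clear; lia.
  have [n6|n6] := leqP 6 n.
    apply/matrixP => a b; rewrite mxE; apply/eqP; apply: contraT => nz.
    have [h1 h2 h3] := co a b nz.
    have h1' : degN a < 0 := h1.
    have h2' : parN a := h2.
    have h3' : degN b = degN a + n%:Z := h3.
    have H : cb a b := allI_idx _ (allI_idx _ check_big_ok a) b.
    move: H; rewrite /cb h2' h1' /= h3' ltrD2l.
    by move: n6; clear; lia.
  case: n n0 n6 d0 co => [|[|[|[|[|[|n]]]]]] // _ _ _ co.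
  + exact: (chainP chainL1 cc (van_cochain co) c1).
  + exact: (chainP chainL2 cc (van_cochain co) c2).
  + exact: (chainP chainL3 cc (van_cochain co) c3).
  + exact: (chainP chainL4 cc (van_cochain co) c4).
  + exact: (chainP chainL5 cc (van_cochain co) c5).
Qed.
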